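(* Thompson's group $T$ has exponential conjugacy growth.
   Context: Let $\mathfrak{C}=\{0,1\}^\omega$ be the Cantor space with the product topology. For $w_1,w_2\in\{0,1\}^*$, a homeomorphism maps $w_1\mathfrak{C}$ rigidly to $w_2\mathfrak{C}$ if it restricts to $w_1y\mapsto w_2y$. Thompson's group $V$ is the group of homeomorphisms $v$ of $\mathfrak{C}$ such that every $x\in\mathfrak{C}$ lies in a cone $w\mathfrak{C}$ that $v$ maps rigidly onto some cone; Thompson's group $T\le V$ is the subgroup of those elements preserving the cyclic order on $\mathfrak{C}$ induced by the lexicographic order. $T$ is finitely generated. The conjugacy growth function of a finitely generated group with finite generating set $\Sigma$ sends $n$ to the number of conjugacy classes containing an element of word length at most $n$; exponential means it is equivalent to $n\mapsto 2^n$ under the relation $f\sim g$ iff $f\preccurlyeq g$ and $g\preccurlyeq f$, where $f\preccurlyeq g$ means there is $\lambda\in\mathbb{N}\setminus\{0\}$ with $f(n)\le\lambda g(\lambda n+\lambda)+\lambda$ for all $n$ (this is independent of $\Sigma$). *)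

(* Defs.v *)
From Stdlib Require Import List Arith PeanoNat.
Import ListNotations.

Definition Cantor := nat -> bool.
Definition word := list bool.

Definition in_cone (w : word) (x : Cantor) : Prop :=
  forall i, i < length w -> x i = nth i w false.

Definition app_word (w : word) (y : Cantor) : Cantor :=
  fun i => if i <? length w then nth i w false else y (i - length w).

Definition agree_upto (n : nat) (x y : Cantor) : Prop := forall i, i < n -> x i = y i.
Definition continuous_C (f : Cantor -> Cantor) : Prop :=
  forall x n, exists m, forall y, agree_upto m x y -> agree_upto n (f x) (f y).

Definition homeomorphism (f : Cantor -> Cantor) : Prop :=
  continuous_C f /\
  exists g : Cantor -> Cantor,
    continuous_C g /\ (forall x, g (f x) = x) /\ (forall x, f (g x) = x).

Definition maps_rigidly (f : Cantor -> Cantor) (w1 w2 : word) : Prop :=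
  forall y, f (app_word w1 y) = app_word w2 y.

Definition inV (f : Cantor -> Cantor) : Prop :=
  homeomorphism f /\
  forall x, exists w1 w2, in_cone w1 x /\ maps_rigidly f w1 w2.

Definition lex_lt (x y : Cantor) : Prop :=
  exists n, agree_upto n x y /\ x n = false /\ y n = true.
Definition cyc (x y z : Cantor) : Prop :=
  (lex_lt x y /\ lex_lt y z) \/ (lex_lt y z /\ lex_lt z x) \/ (lex_lt z x /\ lex_lt x y).

Definition inT (f : Cantor -> Cantor) : Prop :=
  inV f /\ forall x y z, cyc x y z -> cyc (f x) (f y) (f z).

(** Words over a generating list S and their inverses.  A letter (s, true)
    stands for s, (s, false) for s^{-1}; evaluation is composition. *)
Inductive evals : list ((Cantor -> Cantor) * bool) -> (Cantor -> Cantor) -> Prop :=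
| evals_nil : evals [] (fun x => x)
| evals_pos : forall s w g, evals w g -> evals ((s, true) :: w) (fun x => s (g x))
| evals_neg : forall s w g h, evals w g -> (forall x, s (h x) = g x) ->
    evals ((s, false) :: w) h.

Definition wl_le (S : list (Cantor -> Cantor)) (g : Cantor -> Cantor) (n : nat) : Prop :=
  exists w, length w <= n /\ (forall p, In p w -> In (fst p) S) /\ evals w g.

Definition generates_T (S : list (Cantor -> Cantor)) : Prop :=
  (forall s, In s S -> inT s) /\ (forall g, inT g -> exists n, wl_le S g n).

Definition conjT (g h : Cantor -> Cantor) : Prop :=
  exists k, inT k /\ forall x, k (g x) = h (k x).

Definition conj_count (S : list (Cantor -> Cantor)) (n m : nat) : Prop :=
  exists l : list (Cantor -> Cantor),
    length l = m /\
    (forall g, In g l -> inT g /\ wl_le S g n) /\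
    (forall i j, i < m -> j < m -> i <> j ->
       ~ conjT (nth i l (fun x => x)) (nth j l (fun x => x))) /\
    (forall g, inT g -> wl_le S g n -> exists h, In h l /\ conjT g h).

Definition dominated (f g : nat -> nat) : Prop :=
  exists lam, 0 < lam /\ forall n, f n <= lam * g (lam * n + lam) + lam.
Definition growth_equiv (f g : nat -> nat) : Prop := dominated f g /\ dominated g f.

(* Main.v *)
Require Import Defs.
From Stdlib Require Import List Arith PeanoNat Lia Bool Permutation.
From Stdlib Require Import Classical ClassicalEpsilon FunctionalExtensionality.
Import ListNotations.

Definition bcons (b : bool) (x : Cantor) : Cantor :=
  fun i => match i with 0 => b | S j => x j end.
Definition shift (x : Cantor) : Cantor := fun i => x (S i).
Definition dropn (n : nat) (x : Cantor) : Cantor := fun i => x (n + i).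
Definition zeros : Cantor := fun _ => false.
Definition ones : Cantor := fun _ => true.

Lemma eta_bcons x : x = bcons (x 0) (shift x).
Proof. apply functional_extensionality; intros [|i]; reflexivity. Qed.

Lemma bcons_inj b c x y : bcons b x = bcons c y -> b = c /\ x = y.
Proof.
  intros H. split.
  - exact (f_equal (fun z => z 0) H).
  - exact (f_equal shift H).
Qed.

Lemma app_nil y : app_word [] y = y.
Proof. apply functional_extensionality; intros i. unfold app_word; simpl. f_equal; lia. Qed.

Lemma app_cons b w y : app_word (b :: w) y = bcons b (app_word w y).
Proof.
  apply functional_extensionality; intros [|i]; unfold app_word; simpl; try reflexivity.
Qed.

Lemma app_app u v y : app_word (u ++ v) y = app_word u (app_word v y).
Proof.
  induction u; simpl. - now rewrite app_nil. - now rewrite !app_cons, IHu.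
Qed.

Lemma in_cone_nil x : in_cone [] x.
Proof. intros i Hi; simpl in Hi; lia. Qed.

Lemma in_cone_cons b w x : in_cone (b :: w) x <-> x 0 = b /\ in_cone w (shift x).
Proof.
  split.
  - intros H. split. apply (H 0); simpl; lia.
    intros i Hi. apply (H (S i)); simpl; lia.
  - intros [H0 H] [|i] Hi; simpl; auto. apply H. simpl in Hi; lia.
Qed.

Lemma in_cone_app_word w y : in_cone w (app_word w y).
Proof.
  induction w. apply in_cone_nil.
  rewrite app_cons, in_cone_cons. split; auto.
Qed.

Lemma cone_decomp w x : in_cone w x -> x = app_word w (dropn (length w) x).
Proof.
  revert x; induction w as [|b w IH]; intros x H.
  - rewrite app_nil. apply functional_extensionality; intros i; reflexivity.
  - rewrite in_cone_cons in H. destruct H as [H0 H].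
    rewrite app_cons. rewrite (eta_bcons x) at 1. rewrite H0. f_equal.
    rewrite (IH _ H). f_equal.
Qed.

Lemma app_inj w y1 y2 : app_word w y1 = app_word w y2 -> y1 = y2.
Proof.
  induction w; simpl. - now rewrite !app_nil.
  - rewrite !app_cons. intros H. apply bcons_inj in H. apply IHw, H.
Qed.

Lemma in_cone_app u v x : in_cone (u ++ v) x <-> in_cone u x /\ in_cone v (dropn (length u) x).
Proof.
  revert x; induction u as [|b u IH]; intros x; simpl.
  - split. intros H; split; [apply in_cone_nil|]. intros i Hi; apply H; auto.
    intros [_ H] i Hi; apply H; auto.
  - rewrite !in_cone_cons, IH. unfold dropn, shift. simpl. tauto.
Qed.

Lemma cone_prefix w w' x : in_cone w x -> in_cone w' x -> length w <= length w' ->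
  exists s, w' = w ++ s.
Proof.
  revert w' x; induction w as [|b w IH]; intros w' x H H' Hl.
  - exists w'; reflexivity.
  - destruct w' as [|b' w']; simpl in Hl; [lia|].
    rewrite in_cone_cons in H, H'. destruct H, H'.
    destruct (IH w' (shift x)) as [s Hs]; auto; try lia.
    exists s. subst. simpl. congruence.
Qed.

Lemma cone_len_eq w w' x : in_cone w x -> in_cone w' x -> length w = length w' -> w = w'.
Proof.
  intros H H' Hl. destruct (cone_prefix w w' x H H') as [s Hs]; [lia|].
  subst. rewrite length_app in Hl. destruct s; simpl in Hl; [|lia]. now rewrite app_nil_r.
Qed.

Fixpoint pre (n : nat) (x : Cantor) : word :=
  match n with 0 => [] | S n => x 0 :: pre n (shift x) end.

Lemma pre_len n x : length (pre n x) = n.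
Proof. revert x; induction n; simpl; auto. Qed.

Lemma pre_cone n x : in_cone (pre n x) x.
Proof.
  revert x; induction n; intros x; simpl. apply in_cone_nil.
  rewrite in_cone_cons; auto.
Qed.

Lemma dropn_app w y : dropn (length w) (app_word w y) = y.
Proof.
  induction w; simpl. - rewrite app_nil. apply functional_extensionality; intros i; reflexivity.
  - rewrite app_cons. rewrite <- IHw at 2. apply functional_extensionality; intros i; reflexivity.
Qed.

Lemma in_cone_app_word_gen u w y : in_cone u (app_word w y) ->
  (length u <= length w -> exists t, w = u ++ t) /\
  (length w <= length u -> exists t, u = w ++ t /\ in_cone t y).
Proof.
  intros H. split; intros Hl.
  - exact (cone_prefix u w _ H (in_cone_app_word w y) Hl).
  - destruct (cone_prefix w u _ (in_cone_app_word w y) H Hl) as [t Ht].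
    exists t; split; auto. subst. apply in_cone_app in H. destruct H as [_ H].
    rewrite dropn_app in H. exact H.
Qed.

Lemma mr_ext f u v t : maps_rigidly f u v -> maps_rigidly f (u ++ t) (v ++ t).
Proof. intros H y. rewrite !app_app. apply H. Qed.

Lemma mr_comp (f g : Cantor -> Cantor) u v w :
  maps_rigidly g u v -> maps_rigidly f v w -> maps_rigidly (fun x => f (g x)) u w.
Proof. intros H1 H2 y. rewrite H1. apply H2. Qed.

Lemma mr_inv (f g : Cantor -> Cantor) u v :
  (forall x, g (f x) = x) -> maps_rigidly f u v -> maps_rigidly g v u.
Proof. intros Hg H y. rewrite <- (H y). apply Hg. Qed.

Lemma mr_id u : maps_rigidly (fun x => x) u u.
Proof. intros y; reflexivity. Qed.

Lemma app_len_eq a b : (forall y, app_word a y = app_word b y) -> length a = length b.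
Proof.
  revert b; induction a as [|c a IH]; intros [|d b] H; simpl; auto.
  - exfalso. specialize (H (bcons (negb d) zeros)).
    rewrite app_nil, app_cons in H. apply bcons_inj in H. destruct d; simpl in H; intuition discriminate.
  - exfalso. specialize (H (bcons (negb c) zeros)).
    rewrite app_nil, app_cons in H. apply bcons_inj in H. destruct c; simpl in H; intuition discriminate.
  - f_equal. apply IH. intros y. specialize (H y). rewrite !app_cons in H.
    apply bcons_inj in H. tauto.
Qed.

Lemma mr_unique (g : Cantor -> Cantor) u v u' v' p :
  in_cone u p -> in_cone u' p -> maps_rigidly g u v -> maps_rigidly g u' v' ->
  length v + length u' = length v' + length u.
Proof.
  intros Hu Hu' H H'.
  destruct (Nat.le_ge_cases (length u) (length u')) as [Hl|Hl].
  - destruct (cone_prefix u u' p Hu Hu' Hl) as [t Ht]. subst u'.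
    assert (E : forall y, app_word (v ++ t) y = app_word v' y).
    { intros y. rewrite <- H'. rewrite !app_app, H. reflexivity. }
    apply app_len_eq in E. rewrite length_app in *. lia.
  - destruct (cone_prefix u' u p Hu' Hu Hl) as [t Ht]. subst u.
    assert (E : forall y, app_word (v' ++ t) y = app_word v y).
    { intros y. rewrite <- H. rewrite !app_app, H'. reflexivity. }
    apply app_len_eq in E. rewrite length_app in *. lia.
Qed.

Lemma least_ex (P : nat -> Prop) : (exists n, P n) -> exists n, P n /\ forall m, m < n -> ~ P m.
Proof.
  intros [n Hn]. revert Hn. induction n as [n IH] using lt_wf_ind. intros Hn.
  destruct (classic (exists m, m < n /\ P m)) as [[m [Hm Pm]]|Hno].
  - exact (IH m Hm Pm).
  - exists n. split; auto. intros m Hm Pm. apply Hno; eauto.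
Qed.

Lemma lex_irrefl x : ~ lex_lt x x.
Proof. intros [n [_ [H1 H2]]]. congruence. Qed.

Lemma lex_trans x y z : lex_lt x y -> lex_lt y z -> lex_lt x z.
Proof.
  intros [n1 [A1 [B1 C1]]] [n2 [A2 [B2 C2]]].
  destruct (lt_eq_lt_dec n1 n2) as [[H|H]|H].
  - exists n1. split; [|split]; auto. intros i Hi. rewrite A1 by lia. apply A2; lia.
    rewrite <- A2 by lia. auto.
  - subst. congruence.
  - exists n2. split; [|split]; auto. intros i Hi. rewrite A1 by lia. apply A2; lia.
    rewrite A1 by lia. auto.
Qed.

Lemma lex_asym x y : lex_lt x y -> ~ lex_lt y x.
Proof. intros H1 H2. apply (lex_irrefl x). eapply lex_trans; eauto. Qed.

Lemma lex_total x y : x <> y -> lex_lt x y \/ lex_lt y x.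
Proof.
  intros Hne.
  assert (Ex : exists i, x i <> y i).
  { apply NNPP; intros Hn. apply Hne. apply functional_extensionality; intros i.
    apply NNPP; intros Hi. apply Hn; eauto. }
  destruct (least_ex _ Ex) as [m [Hm Hmin]].
  assert (Ag : agree_upto m x y).
  { intros i Hi. apply NNPP. apply Hmin; auto. }
  destruct (x m) eqn:E1, (y m) eqn:E2; try congruence.
  - right. exists m. split; auto. intros i Hi; symmetry; auto.
  - left. exists m. auto.
Qed.

Lemma lex_bb b x y : lex_lt (bcons b x) (bcons b y) <-> lex_lt x y.
Proof.
  split.
  - intros [n [A [B C]]]. destruct n as [|n]. simpl in B, C. congruence.
    exists n. split; [|split]; auto. intros i Hi. apply (A (S i)); lia.
  - intros [n [A [B C]]]. exists (S n). split; [|split]; auto.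
    intros [|i] Hi; simpl; auto. apply A; lia.
Qed.

Lemma lex_ft x y : lex_lt (bcons false x) (bcons true y).
Proof. exists 0. split; [|split]; auto. intros i Hi; lia. Qed.

Lemma lex_tf x y : ~ lex_lt (bcons true x) (bcons false y).
Proof. intros H. apply (lex_asym _ _ H). apply lex_ft. Qed.

Lemma lex_app_same w x y : lex_lt (app_word w x) (app_word w y) <-> lex_lt x y.
Proof.
  induction w. rewrite !app_nil; tauto. rewrite !app_cons, lex_bb. auto.
Qed.

Ltac lexcontra := match goal with
 | H : lex_lt ?a ?a |- _ => exact (False_ind _ (lex_irrefl _ H))
 | H1: lex_lt ?a ?b, H2: lex_lt ?b ?a |- _ => exact (False_ind _ (lex_asym _ _ H1 H2))
 | H1: lex_lt ?a ?b, H2: lex_lt ?b ?c, H3: lex_lt ?c ?a |- _ =>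
     exact (False_ind _ (lex_asym _ _ H1 (lex_trans _ _ _ H2 H3)))
end.
Lemma cyc_rot x y z : cyc x y z -> cyc y z x.
Proof. unfold cyc; tauto. Qed.

Lemma cyc_distinct x y z : cyc x y z -> x <> y /\ y <> z /\ x <> z.
Proof.
  intros H. assert (Ir := lex_irrefl). assert (Tr := lex_trans).
  unfold cyc in H. split; [|split]; intros E; subst;
  destruct H as [[H1 H2]|[[H1 H2]|[H1 H2]]]; 
  first [ exact (lex_irrefl _ H1) | exact (lex_irrefl _ H2) | exact (lex_asym _ _ H1 H2)
        | exact (lex_asym _ _ H2 H1) | exact (lex_irrefl _ (lex_trans _ _ _ H1 H2))
        | exact (lex_irrefl _ (lex_trans _ _ _ H2 H1)) ].
Qed.

Lemma cyc_asym x y z : cyc x y z -> ~ cyc x z y.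
Proof.
  intros H H'. assert (Ir := lex_irrefl). assert (Tr := lex_trans).
  unfold cyc in *.
  destruct H as [[H1 H2]|[[H1 H2]|[H1 H2]]];
  destruct H' as [[H3 H4]|[[H3 H4]|[H3 H4]]]; lexcontra.
Qed.

Lemma cyc_total x y z : x <> y -> y <> z -> x <> z -> cyc x y z \/ cyc x z y.
Proof.
  intros H1 H2 H3. assert (Tr := lex_trans).
  destruct (lex_total _ _ H1); destruct (lex_total _ _ H2); destruct (lex_total _ _ H3);
  unfold cyc; eauto 6.
Qed.

Definition locrig (f : Cantor -> Cantor) : Prop :=
  forall x, exists w1 w2, in_cone w1 x /\ maps_rigidly f w1 w2.
Definition cycpres (f : Cantor -> Cantor) : Prop :=
  forall x y z, cyc x y z -> cyc (f x) (f y) (f z).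
Definition mono (f : Cantor -> Cantor) : Prop :=
  forall x y, lex_lt x y -> lex_lt (f x) (f y).

Lemma locrig_cont f : locrig f -> continuous_C f.
Proof.
  intros H x n. destruct (H x) as [w1 [w2 [Hc Hr]]].
  exists (length w1 + n). intros y Hy.
  assert (Hcy : in_cone w1 y).
  { intros i Hi. rewrite <- Hy by lia. apply Hc; auto. }
  rewrite (cone_decomp w1 x Hc), (cone_decomp w1 y Hcy), !Hr.
  intros i Hi. unfold app_word. destruct (i <? length w2) eqn:E; auto.
  unfold dropn. apply Hy. apply Nat.ltb_ge in E. lia.
Qed.

Lemma locrig_inv f g : locrig f -> (forall x, g (f x) = x) -> (forall x, f (g x) = x) -> locrig g.
Proof.
  intros H Hgf Hfg y. destruct (H (g y)) as [w1 [w2 [Hc Hr]]].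
  exists w2, w1. split.
  - rewrite <- (Hfg y). rewrite (cone_decomp w1 _ Hc), Hr. apply in_cone_app_word.
  - eapply mr_inv; eauto.
Qed.

Lemma mono_cyc f : mono f -> cycpres f.
Proof. intros H x y z Hc. unfold cyc in *. intuition auto. Qed.

Lemma mkT f g : (forall x, g (f x) = x) -> (forall x, f (g x) = x) -> locrig f -> cycpres f -> inT f.
Proof.
  intros Hgf Hfg Hl Hc. split; [split|]; auto.
  split. apply locrig_cont; auto.
  exists g. split; [|split]; auto. apply locrig_cont. eapply locrig_inv; eauto.
Qed.

Lemma inT_locrig f : inT f -> locrig f.
Proof. intros [[_ H] _]. exact H. Qed.

Lemma inT_inv_ex f : inT f -> exists g, (forall x, g (f x) = x) /\ (forall x, f (g x) = x).
Proof. intros [[[_ [g [_ [H1 H2]]]] _] _]. eauto. Qed.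

Lemma inT_inj f x y : inT f -> f x = f y -> x = y.
Proof. intros H E. destruct (inT_inv_ex f H) as [g [H1 _]]. rewrite <- (H1 x), <- (H1 y). congruence. Qed.

Lemma inT_inv f g : inT f -> (forall x, g (f x) = x) -> (forall x, f (g x) = x) -> inT g.
Proof.
  intros HT Hgf Hfg. apply (mkT g f); auto.
  - eapply locrig_inv; eauto. apply inT_locrig; auto.
  - intros x y z Hc. destruct (cyc_distinct _ _ _ Hc) as [D1 [D2 D3]].
    assert (Dg : forall a b, a <> b -> g a <> g b).
    { intros a b Hab E. apply Hab. rewrite <- (Hfg a), <- (Hfg b). congruence. }
    destruct (cyc_total (g x) (g y) (g z)) as [H|H]; auto.
    exfalso. destruct HT as [_ Hcyc]. apply Hcyc in H. rewrite !Hfg in H.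
    exact (cyc_asym _ _ _ Hc H).
Qed.

Lemma inT_inv_ex2 f : inT f -> exists g, inT g /\ (forall x, g (f x) = x) /\ (forall x, f (g x) = x).
Proof.
  intros H. destruct (inT_inv_ex f H) as [g [H1 H2]]. exists g. split; auto. eapply inT_inv; eauto.
Qed.

Lemma locrig_comp f g : locrig f -> locrig g -> locrig (fun x => f (g x)).
Proof.
  intros Hf Hg x. destruct (Hg x) as [w1 [w2 [Hc Hr]]].
  destruct (Hf (g x)) as [u1 [u2 [Hc' Hr']]].
  rewrite (cone_decomp w1 x Hc), Hr in Hc'.
  destruct (in_cone_app_word_gen _ _ _ Hc') as [P1 P2].
  destruct (Nat.le_ge_cases (length u1) (length w2)) as [Hl|Hl].
  - destruct (P1 Hl) as [t Ht]. exists w1, (u2 ++ t). split; auto.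
    intros y. rewrite Hr, Ht, app_app, Hr'. apply eq_sym, app_app.
  - destruct (P2 Hl) as [t [Ht Hct]]. exists (w1 ++ t), u2. split.
    + apply in_cone_app. split; auto.
    + intros y. rewrite app_app, Hr, <- app_app, <- Ht. apply Hr'.
Qed.

Lemma inT_comp f g : inT f -> inT g -> inT (fun x => f (g x)).
Proof.
  intros Hf Hg. destruct (inT_inv_ex f Hf) as [f' [F1 F2]].
  destruct (inT_inv_ex g Hg) as [g' [G1 G2]].
  apply (mkT _ (fun x => g' (f' x))).
  - intros x. rewrite F1; auto.
  - intros x. rewrite G2; auto.
  - apply locrig_comp; apply inT_locrig; auto.
  - intros x y z Hc. apply Hf, Hg, Hc.
Qed.

Lemma inT_id : inT (fun x => x).
Proof.
  apply (mkT _ (fun x => x)); auto.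
  - intros x. exists [], []. split. apply in_cone_nil. apply mr_id.
  - intros x y z H; exact H.
Qed.

Lemma inT_ext f g : inT f -> (forall x, f x = g x) -> inT g.
Proof. intros H E. replace g with f; auto. apply functional_extensionality; auto. Qed.

Lemma eta2 x : x = bcons (x 0) (bcons (x 1) (shift (shift x))).
Proof. apply functional_extensionality; intros [|[|i]]; reflexivity. Qed.

Ltac lexsimp := repeat (rewrite lex_bb in *).
Ltac lexclose := first [ assumption | apply lex_ft | exfalso; eapply lex_tf; eassumption ].

Definition A (x : Cantor) : Cantor :=
  match x 0 with
  | false => match x 1 with
             | false => bcons false (shift (shift x))
             | true => bcons true (bcons false (shift (shift x))) end
  | true => bcons true (bcons true (shift x)) end.
Definition Ainv (x : Cantor) : Cantor :=
  match x 0 with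
  | false => bcons false (bcons false (shift x))
  | true => match x 1 with
            | false => bcons false (bcons true (shift (shift x)))
            | true => bcons true (shift (shift x)) end end.

Lemma A_00 z : A (bcons false (bcons false z)) = bcons false z. Proof. reflexivity. Qed.
Lemma A_01 z : A (bcons false (bcons true z)) = bcons true (bcons false z). Proof. reflexivity. Qed.
Lemma A_1 z : A (bcons true z) = bcons true (bcons true z). Proof. reflexivity. Qed.
Lemma Ainv_0 z : Ainv (bcons false z) = bcons false (bcons false z). Proof. reflexivity. Qed.
Lemma Ainv_10 z : Ainv (bcons true (bcons false z)) = bcons false (bcons true z). Proof. reflexivity. Qed.
Lemma Ainv_11 z : Ainv (bcons true (bcons true z)) = bcons true z. Proof. reflexivity. Qed.

Lemma AinvA x : Ainv (A x) = x.
Proof.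
  rewrite (eta2 x). destruct (x 0), (x 1).
  - rewrite A_1, Ainv_11. reflexivity.
  - rewrite A_1, Ainv_11. reflexivity.
  - rewrite A_01, Ainv_10. reflexivity.
  - rewrite A_00, Ainv_0. reflexivity.
Qed.

Lemma AAinv x : A (Ainv x) = x.
Proof.
  rewrite (eta2 x). destruct (x 0), (x 1).
  - rewrite Ainv_11, A_1. reflexivity.
  - rewrite Ainv_10, A_01. reflexivity.
  - rewrite Ainv_0, A_00. reflexivity.
  - rewrite Ainv_0, A_00. reflexivity.
Qed.

Lemma in_cone_2 a b z : in_cone [a; b] (bcons a (bcons b z)).
Proof. rewrite in_cone_cons, in_cone_cons. repeat split; apply in_cone_nil. Qed.
Lemma in_cone_1 a z : in_cone [a] (bcons a z).
Proof. rewrite in_cone_cons. repeat split; apply in_cone_nil. Qed.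

Ltac rigsimp := intros ?y; repeat rewrite app_cons; rewrite ?app_nil.

Lemma A_locrig : locrig A.
Proof.
  intros x. rewrite (eta2 x). destruct (x 0), (x 1).
  - exists [true], [true; true]. split. apply in_cone_1. rigsimp. apply A_1.
  - exists [true], [true; true]. split. apply in_cone_1. rigsimp. apply A_1.
  - exists [false; true], [true; false]. split. apply in_cone_2. rigsimp. apply A_01.
  - exists [false; false], [false]. split. apply in_cone_2. rigsimp. apply A_00.
Qed.

Lemma A_mono : mono A.
Proof.
  intros x y H. rewrite (eta2 x), (eta2 y) in *.
  destruct (x 0), (x 1), (y 0), (y 1);
  rewrite ?A_1, ?A_01, ?A_00 in *; lexsimp; lexclose.
Qed.

Lemma A_T : inT A.
Proof.
  apply (mkT A Ainv). apply AinvA. apply AAinv. apply A_locrig. apply mono_cyc, A_mono.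
Qed.

Lemma Ainv_T : inT Ainv.
Proof. apply (inT_inv A). apply A_T. apply AinvA. apply AAinv. Qed.

Definition rho (x : Cantor) : Cantor := bcons (negb (x 0)) (shift x).
Lemma rho_b b z : rho (bcons b z) = bcons (negb b) z. Proof. reflexivity. Qed.
Lemma rho_rho x : rho (rho x) = x.
Proof. rewrite (eta_bcons x). rewrite !rho_b, negb_involutive. reflexivity. Qed.

Lemma rho_cyc : cycpres rho.
Proof.
  intros x y z H. rewrite (eta_bcons x), (eta_bcons y), (eta_bcons z) in *.
  rewrite !rho_b. unfold cyc in *.
  destruct (x 0), (y 0), (z 0); simpl negb in *; lexsimp;
  repeat match goal with
  | H : context [lex_lt (bcons true ?a) (bcons false ?b)] |- _ =>
      let E := fresh in assert (E : lex_lt (bcons true a) (bcons false b) <-> False) by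
        (split; [apply lex_tf | tauto]); rewrite E in H; clear E
  | |- context [lex_lt (bcons true ?a) (bcons false ?b)] =>
      let E := fresh in assert (E : lex_lt (bcons true a) (bcons false b) <-> False) by
        (split; [apply lex_tf | tauto]); rewrite E; clear E
  | H : context [lex_lt (bcons false ?a) (bcons true ?b)] |- _ =>
      let E := fresh in assert (E : lex_lt (bcons false a) (bcons true b) <-> True) by
        (split; [tauto | intros; apply lex_ft]); rewrite E in H; clear E
  | |- context [lex_lt (bcons false ?a) (bcons true ?b)] =>
      let E := fresh in assert (E : lex_lt (bcons false a) (bcons true b) <-> True) by
        (split; [tauto | intros; apply lex_ft]); rewrite E; clear E
  end; tauto.
Qed.

Lemma rho_T : inT rho.
Proof.
  apply (mkT rho rho). apply rho_rho. apply rho_rho.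
  - intros x. rewrite (eta_bcons x). exists [x 0], [negb (x 0)]. split. apply in_cone_1.
    rigsimp. apply rho_b.
  - apply rho_cyc.
Qed.

Definition L (b : bool) (h : Cantor -> Cantor) (x : Cantor) : Cantor :=
  if Bool.eqb (x 0) b then bcons b (h (shift x)) else x.

Lemma L_eq b h c z : L b h (bcons c z) = if Bool.eqb c b then bcons b (h z) else bcons c z.
Proof. reflexivity. Qed.
Lemma L_in b h z : L b h (bcons b z) = bcons b (h z).
Proof. rewrite L_eq. now rewrite eqb_reflx. Qed.
Lemma L_out b h z : L b h (bcons (negb b) z) = bcons (negb b) z.
Proof. rewrite L_eq. destruct b; reflexivity. Qed.

Lemma L_T b h : inT h -> mono h -> inT (L b h) /\ mono (L b h).
Proof.
  intros HT Hm. destruct (inT_inv_ex h HT) as [g [G1 G2]].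
  assert (Mo : mono (L b h)).
  { intros x y H. rewrite (eta_bcons x), (eta_bcons y) in *. rewrite !L_eq.
    destruct (x 0), (y 0), b; simpl; lexsimp; try lexclose; auto. }
  split; auto.
  apply (mkT _ (L b g)).
  - intros x. rewrite (eta_bcons x). rewrite !L_eq. destruct (Bool.eqb (x 0) b) eqn:E.
    + apply eqb_prop in E. subst. rewrite L_in, G1. reflexivity.
    + rewrite L_eq, E. reflexivity.
  - intros x. rewrite (eta_bcons x). rewrite !L_eq. destruct (Bool.eqb (x 0) b) eqn:E.
    + apply eqb_prop in E. subst. rewrite L_in, G2. reflexivity.
    + rewrite L_eq, E. reflexivity.
  - intros x. rewrite (eta_bcons x). destruct (Bool.eqb (x 0) b) eqn:E.
    + apply eqb_prop in E. rewrite E.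
      destruct (inT_locrig h HT (shift x)) as [u [v [Hc Hr]]].
      exists (b :: u), (b :: v). split. rewrite in_cone_cons; auto.
      intros y. rewrite !app_cons, L_in, Hr. reflexivity.
    + exists [x 0], [x 0]. split. apply in_cone_1. intros y. rewrite !app_cons, !app_nil, L_eq, E.
      reflexivity.
  - apply mono_cyc, Mo.
Qed.

Fixpoint pw (n : nat) (f : Cantor -> Cantor) (x : Cantor) : Cantor :=
  match n with 0 => x | S n => f (pw n f x) end.

Lemma pw_S' n f x : pw (S n) f x = pw n f (f x).
Proof. induction n; simpl; auto. simpl in IHn. rewrite IHn. reflexivity. Qed.

Lemma pw_T n f : inT f -> inT (pw n f).
Proof.
  intros H. induction n; simpl. apply inT_id. apply (inT_comp f (pw n f)); auto.
Qed.

Lemma pw_mono n f : mono f -> mono (pw n f).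
Proof. intros H; induction n; intros x y Hxy; simpl; auto. Qed.

Lemma app_rep_b b d y : app_word (repeat b d) (bcons b y) = bcons b (app_word (repeat b d) y).
Proof. induction d; simpl. now rewrite !app_nil. rewrite !app_cons, IHd. reflexivity. Qed.

Lemma pwA_one d y : pw d A (bcons true y) = bcons true (app_word (repeat true d) y).
Proof.
  induction d; simpl. now rewrite app_nil. rewrite IHd, A_1, app_cons. reflexivity.
Qed.

Lemma pwA_zero d y : pw d A (bcons false (app_word (repeat false d) y)) = bcons false y.
Proof.
  revert y; induction d; intros y. simpl. now rewrite app_nil.
  rewrite pw_S'. cbn [repeat]. rewrite app_cons, A_00. apply IHd.
Qed.

Lemma lex_0z z m : z m = true -> lex_lt (bcons false z) z.
Proof.
  revert z; induction m; intros z Hz.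
  - rewrite (eta_bcons z) at 2. rewrite Hz. apply lex_ft.
  - destruct (z 0) eqn:E.
    + rewrite (eta_bcons z) at 2. rewrite E. apply lex_ft.
    + rewrite (eta_bcons z). rewrite E. rewrite lex_bb. apply IHm. exact Hz.
Qed.

Lemma lex_z1 z m : z m = false -> lex_lt z (bcons true z).
Proof.
  revert z; induction m; intros z Hz.
  - rewrite (eta_bcons z) at 1. rewrite Hz. apply lex_ft.
  - destruct (z 0) eqn:E.
    + rewrite (eta_bcons z). rewrite E. rewrite lex_bb. apply IHm. exact Hz.
    + rewrite (eta_bcons z) at 1. rewrite E. apply lex_ft.
Qed.

Lemma not_zeros z : z <> zeros -> exists m, z m = true.
Proof.
  intros H. apply NNPP; intros Hn. apply H. apply functional_extensionality; intros i.
  unfold zeros. destruct (z i) eqn:E; auto. exfalso; eauto.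
Qed.
Lemma not_ones z : z <> ones -> exists m, z m = false.
Proof.
  intros H. apply NNPP; intros Hn. apply H. apply functional_extensionality; intros i.
  unfold ones. destruct (z i) eqn:E; auto. exfalso; eauto.
Qed.

Lemma zeros_eq : zeros = bcons false zeros.
Proof. apply functional_extensionality; intros [|i]; reflexivity. Qed.
Lemma ones_eq : ones = bcons true ones.
Proof. apply functional_extensionality; intros [|i]; reflexivity. Qed.

Lemma A_fix y : y = zeros \/ y = ones \/ lex_lt y (A y).
Proof.
  rewrite (eta2 y). destruct (y 0), (y 1).
  - rewrite A_1. set (z := bcons true (shift (shift y))).
    destruct (classic (z = ones)) as [E|E].
    + right; left. rewrite E. now rewrite <- ones_eq.
    + right; right. destruct (not_ones z E) as [m Hm]. rewrite lex_bb. eapply lex_z1; eauto.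
  - rewrite A_1. set (z := bcons false (shift (shift y))).
    right; right. rewrite lex_bb. apply (lex_z1 z 0). reflexivity.
  - rewrite A_01. right; right. apply lex_ft.
  - rewrite A_00. set (z := shift (shift y)).
    destruct (classic (z = zeros)) as [E|E].
    + left. rewrite E. now rewrite <- !zeros_eq.
    + right; right. destruct (not_zeros z E) as [m Hm]. rewrite lex_bb. eapply lex_0z; eauto.
Qed.

Lemma pwA_fix d y : 1 <= d -> pw d A y = y -> y = zeros \/ y = ones.
Proof.
  intros Hd E. destruct (A_fix y) as [H|[H|H]]; auto. exfalso.
  assert (Hk : forall k, lex_lt y (pw (S k) A y)).
  { induction k. exact H. eapply lex_trans; [exact IHk|]. 
    rewrite (pw_S' (S k)). apply (pw_mono (S k) A A_mono). exact H. }
  destruct d; [lia|]. specialize (Hk d). rewrite E in Hk. exact (lex_irrefl _ Hk).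
Qed.

Lemma evals_app w1 w2 g1 g2 : evals w1 g1 -> evals w2 g2 -> evals (w1 ++ w2) (fun x => g1 (g2 x)).
Proof.
  intros H1 H2. induction H1; simpl.
  - exact H2.
  - exact (evals_pos s (w ++ w2) (fun x => g (g2 x)) IHevals).
  - exact (evals_neg s (w ++ w2) (fun x => g (g2 x)) (fun x => h (g2 x)) IHevals (fun x => H (g2 x))).
Qed.

Lemma wl_le_app S g1 g2 n1 n2 : wl_le S g1 n1 -> wl_le S g2 n2 -> wl_le S (fun x => g1 (g2 x)) (n1 + n2).
Proof.
  intros [w1 [L1 [I1 E1]]] [w2 [L2 [I2 E2]]]. exists (w1 ++ w2). split; [|split].
  - rewrite length_app; lia.
  - intros p Hp. apply in_app_or in Hp. destruct Hp; auto.
  - apply evals_app; auto.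
Qed.

Lemma wl_le_mono S g n m : wl_le S g n -> n <= m -> wl_le S g m.
Proof. intros [w [L [I E]]] H. exists w. split; [lia|auto]. Qed.

Lemma wl_le_ext S g g' n : wl_le S g n -> (forall x, g x = g' x) -> wl_le S g' n.
Proof. intros H E. replace g' with g; auto. apply functional_extensionality; auto. Qed.

Lemma wl_le_gen S s : In s S -> wl_le S s 1.
Proof.
  intros H. exists [(s, true)]. split; [simpl; lia|split].
  - intros p [<-|[]]. exact H.
  - exact (evals_pos s [] (fun x => x) evals_nil).
Qed.

Lemma wl_le_id S : wl_le S (fun x => x) 0.
Proof. exists []. split; [simpl; lia|split]. intros p []. constructor. Qed.

Lemma evals_T S w g : (forall s, In s S -> inT s) -> (forall p, In p w -> In (fst p) S) ->
  evals w g -> inT g.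
Proof.
  intros HS Hw H. induction H.
  - apply inT_id.
  - apply inT_comp. apply HS, (Hw (s, true)); simpl; auto.
    apply IHevals. intros p Hp; apply Hw; simpl; auto.
  - assert (Hs : inT s) by (apply HS, (Hw (s, false)); simpl; auto).
    destruct (inT_inv_ex2 s Hs) as [si [Ts [S1 S2]]].
    apply (inT_ext (fun x => si (g x))).
    + apply inT_comp; auto. apply IHevals. intros p Hp; apply Hw; simpl; auto.
    + intros x. rewrite <- H0. apply S1.
Qed.

Lemma evals_inv S w g : (forall s, In s S -> inT s) -> (forall p, In p w -> In (fst p) S) ->
  evals w g -> exists gi w', length w' = length w /\ (forall p, In p w' -> In (fst p) S) /\
    evals w' gi /\ (forall x, gi (g x) = x) /\ (forall x, g (gi x) = x).
Proof.
  intros HS Hw H. induction H.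
  - exists (fun x => x), []. split; [reflexivity|split; [intros p []|split; [constructor|split; reflexivity]]].
  - assert (Hs : inT s) by (apply HS, (Hw (s, true)); simpl; auto).
    destruct (inT_inv_ex2 s Hs) as [si [Ts [S1 S2]]].
    destruct IHevals as [gi [w' [L [I [E [G1 G2]]]]]].
    { intros p Hp; apply Hw; simpl; auto. }
    exists (fun x => gi (si x)), (w' ++ [(s, false)]). split; [|split; [|split; [|split]]].
    + rewrite length_app; simpl; lia.
    + intros p Hp. apply in_app_or in Hp. destruct Hp as [Hp|[<-|[]]]; auto.
      apply (Hw (s, true)); simpl; auto.
    + apply evals_app; [exact E|]. exact (evals_neg s [] (fun x => x) si evals_nil S2).
    + intros x. rewrite S1. auto.
    + intros x. rewrite G2. auto.
  - assert (Hs : inT s) by (apply HS, (Hw (s, false)); simpl; auto).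
    destruct IHevals as [gi [w' [L [I [E [G1 G2]]]]]].
    { intros p Hp; apply Hw; simpl; auto. }
    exists (fun x => gi (s x)), (w' ++ [(s, true)]). split; [|split; [|split; [|split]]].
    + rewrite length_app; simpl; lia.
    + intros p Hp. apply in_app_or in Hp. destruct Hp as [Hp|[<-|[]]]; auto.
      apply (Hw (s, false)); simpl; auto.
    + apply evals_app; [exact E|]. exact (evals_pos s [] (fun x => x) evals_nil).
    + intros x. rewrite H0. auto.
    + intros x. apply (inT_inj s); auto. rewrite H0. auto.
Qed.

Lemma wl_le_inv S g g' n : (forall s, In s S -> inT s) -> wl_le S g n ->
  (forall x, g' (g x) = x) -> wl_le S g' n.
Proof.
  intros HS [w [L [I E]]] Hg'.
  destruct (evals_inv S w g HS I E) as [gi [w' [L' [I' [E' [G1 G2]]]]]].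
  apply (wl_le_ext S gi). exists w'. split; [lia|auto].
  intros x. rewrite <- (G2 x) at 2. rewrite Hg'. reflexivity.
Qed.

Lemma wl_le_T S g n : (forall s, In s S -> inT s) -> wl_le S g n -> inT g.
Proof. intros HS [w [L [I E]]]. eapply evals_T; eauto. Qed.

Definition Gen (S : list (Cantor -> Cantor)) (g : Cantor -> Cantor) : Prop := exists n, wl_le S g n.

Lemma Gen_comp S f g : Gen S f -> Gen S g -> Gen S (fun x => f (g x)).
Proof. intros [n1 H1] [n2 H2]. exists (n1 + n2). apply wl_le_app; auto. Qed.
Lemma Gen_inv S g g' : (forall s, In s S -> inT s) -> Gen S g -> (forall x, g' (g x) = x) -> Gen S g'.
Proof. intros HS [n H] E. exists n. eapply wl_le_inv; eauto. Qed.
Lemma Gen_ext S g g' : Gen S g -> (forall x, g x = g' x) -> Gen S g'.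
Proof. intros [n H] E. exists n. eapply wl_le_ext; eauto. Qed.
Lemma Gen_gen S s : In s S -> Gen S s.
Proof. intros H. exists 1. apply wl_le_gen; auto. Qed.
Lemma Gen_id S : Gen S (fun x => x).
Proof. exists 0. apply wl_le_id. Qed.
Lemma Gen_T S g : (forall s, In s S -> inT s) -> Gen S g -> inT g.
Proof. intros HS [n H]. eapply wl_le_T; eauto. Qed.
Lemma Gen_pw S f n : Gen S f -> Gen S (pw n f).
Proof. intros H. induction n; simpl. apply Gen_id. apply (Gen_comp S f (pw n f)); auto. Qed.

Definition good (g : Cantor -> Cantor) (u : word) : Prop :=
  exists N, forall t, length t = N -> exists v, maps_rigidly g (u ++ t) v.

Lemma good_split g u : good g (u ++ [false]) -> good g (u ++ [true]) -> good g u.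
Proof.
  intros [N0 H0] [N1 H1]. exists (S (Nat.max N0 N1)). intros [|b t] Ht; simpl in Ht; [lia|].
  injection Ht as Ht.
  assert (K : forall Nb, Nb <= Nat.max N0 N1 ->
            (forall t, length t = Nb -> exists v, maps_rigidly g ((u ++ [b]) ++ t) v) ->
            exists v, maps_rigidly g (u ++ b :: t) v).
  { intros Nb HNb Hb. destruct (Hb (firstn Nb t)) as [v Hv].
    { rewrite length_firstn; lia. }
    exists (v ++ skipn Nb t). replace (u ++ b :: t) with (((u ++ [b]) ++ firstn Nb t) ++ skipn Nb t).
    apply mr_ext; auto. rewrite <- !app_assoc. simpl. rewrite firstn_skipn. reflexivity. }
  destruct b; [apply (K N1)|apply (K N0)]; auto; lia.
Qed.

Fixpoint gpath (g : Cantor -> Cantor) (n : nat) : word :=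
  match n with
  | 0 => []
  | S n => let q := gpath g n in
      q ++ [if excluded_middle_informative (good g (q ++ [false])) then true else false]
  end.

Lemma gpath_len g n : length (gpath g n) = n.
Proof. induction n; simpl; auto. rewrite length_app, IHn; simpl; lia. Qed.

Lemma gpath_prefix g n m : n <= m -> exists s, gpath g m = gpath g n ++ s.
Proof.
  intros H. induction H. exists []; now rewrite app_nil_r.
  destruct IHle as [s Hs]. simpl. rewrite Hs. eexists. rewrite <- app_assoc. reflexivity.
Qed.

Lemma gpath_bad g : ~ good g [] -> forall n, ~ good g (gpath g n).
Proof.
  intros H0 n. induction n; simpl; auto.
  destruct (excluded_middle_informative (good g (gpath g n ++ [false]))); auto.
  intros Ht. apply IHn. apply good_split; auto.
Qed.

Lemma compact g : locrig g -> exists N, forall u, length u = N -> exists v, maps_rigidly g u v.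
Proof.
  intros Hl. destruct (classic (good g [])) as [[N H]|Hb].
  - exists N. intros u Hu. apply (H u Hu).
  - exfalso. set (x := fun i => nth i (gpath g (S i)) false).
    assert (Hx : forall n, in_cone (gpath g n) x).
    { intros n i Hi. unfold x. rewrite gpath_len in Hi.
      destruct (gpath_prefix g (S i) n) as [s Hs]; [lia|]. rewrite Hs.
      rewrite app_nth1; auto. rewrite gpath_len; lia. }
    destruct (Hl x) as [w1 [w2 [Hc Hr]]].
    apply (gpath_bad g Hb (length w1)).
    rewrite <- (cone_len_eq w1 (gpath g (length w1)) x Hc (Hx _)) by (rewrite gpath_len; auto).
    exists 0. intros t Ht. destruct t; [|simpl in Ht; lia]. rewrite app_nil_r. eauto.
Qed.

Definition c (k j : nat) : word := if S j <? k then repeat true j ++ [false] else repeat true j.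

Lemma c_S k j : c (S k) (S j) = true :: c k j.
Proof. unfold c. change (S (S j) <? S k) with (S j <? k). destruct (S j <? k); reflexivity. Qed.
Lemma c_0 k : c (S (S k)) 0 = [false].
Proof. reflexivity. Qed.
Lemma c_10 : c 1 0 = [].
Proof. reflexivity. Qed.

Lemma c_cover k x : 1 <= k -> exists j, j < k /\ in_cone (c k j) x.
Proof.
  revert x; induction k as [|k IH]; intros x Hk; [lia|].
  destruct k as [|k]. - exists 0. split; auto. rewrite c_10. apply in_cone_nil.
  - destruct (x 0) eqn:E.
    + destruct (IH (shift x)) as [j [Hj Hc]]; [lia|]. exists (S j). split; [lia|].
      rewrite c_S, in_cone_cons. auto.
    + exists 0. split; [lia|]. rewrite c_0, in_cone_cons. split; auto. apply in_cone_nil.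
Qed.

Lemma c_disj k i j x : i < k -> j < k -> in_cone (c k i) x -> in_cone (c k j) x -> i = j.
Proof.
  revert i j x; induction k as [|k IH]; intros i j x Hi Hj Hci Hcj; [lia|].
  destruct i as [|i], j as [|j]; auto.
  - destruct k; [lia|]. rewrite c_0 in Hci. rewrite c_S in Hcj.
    rewrite in_cone_cons in Hci, Hcj. destruct Hci, Hcj; congruence.
  - destruct k; [lia|]. rewrite c_0 in Hcj. rewrite c_S in Hci.
    rewrite in_cone_cons in Hci, Hcj. destruct Hci, Hcj; congruence.
  - rewrite c_S, in_cone_cons in Hci, Hcj. f_equal. apply (IH i j (shift x)); try lia; tauto.
Qed.

Lemma c_lex k i j y y' : i < j -> j < k -> lex_lt (app_word (c k i) y) (app_word (c k j) y').
Proof.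
  revert i j; induction k as [|k IH]; intros i j Hij Hj; [lia|].
  destruct i as [|i], j as [|j]; try lia.
  - destruct k; [lia|]. rewrite c_0, c_S, !app_cons. apply lex_ft.
  - rewrite !c_S, !app_cons, lex_bb. apply IH; lia.
Qed.

Definition x1 : Cantor -> Cantor := L true A.
Definition S0 : list (Cantor -> Cantor) := [A; x1; rho].

Lemma x1_T : inT x1.
Proof. apply (L_T true A A_T A_mono). Qed.

Lemma S0_T : forall s, In s S0 -> inT s.
Proof. intros s [<-|[<-|[<-|[]]]]. apply A_T. apply x1_T. apply rho_T. Qed.

Lemma Gen_A : Gen S0 A. Proof. apply Gen_gen. simpl; auto. Qed.
Lemma Gen_x1 : Gen S0 x1. Proof. apply Gen_gen. simpl; auto. Qed.
Lemma Gen_rho : Gen S0 rho. Proof. apply Gen_gen. simpl; auto. Qed.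
Lemma Gen_Ainv : Gen S0 Ainv.
Proof. apply (Gen_inv S0 A). apply S0_T. apply Gen_A. apply AinvA. Qed.

Lemma mr1 (f : Cantor -> Cantor) u v : (forall y, f (app_word u y) = app_word v y) -> maps_rigidly f u v.
Proof. auto. Qed.

Lemma Ainv_r0 : maps_rigidly Ainv [false] [false; false].
Proof. rigsimp. apply Ainv_0. Qed.
Lemma Ainv_r10 : maps_rigidly Ainv [true; false] [false; true].
Proof. rigsimp. apply Ainv_10. Qed.
Lemma Ainv_r11 : maps_rigidly Ainv [true; true] [true].
Proof. rigsimp. apply Ainv_11. Qed.
Lemma A_r00 : maps_rigidly A [false; false] [false].
Proof. rigsimp. apply A_00. Qed.
Lemma A_r01 : maps_rigidly A [false; true] [true; false].
Proof. rigsimp. apply A_01. Qed.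
Lemma A_r1 : maps_rigidly A [true] [true; true].
Proof. rigsimp. apply A_1. Qed.
Lemma x1_r0 : maps_rigidly x1 [false] [false].
Proof. rigsimp. unfold x1. apply (L_out true A). Qed.
Lemma x1_r100 : maps_rigidly x1 [true; false; false] [true; false].
Proof. rigsimp. unfold x1. rewrite L_in, A_00. reflexivity. Qed.
Lemma x1_r101 : maps_rigidly x1 [true; false; true] [true; true; false].
Proof. rigsimp. unfold x1. rewrite L_in, A_01. reflexivity. Qed.
Lemma x1_r11 : maps_rigidly x1 [true; true] [true; true; true].
Proof. rigsimp. unfold x1. rewrite L_in, A_1. reflexivity. Qed.
Lemma rho_r0 : maps_rigidly rho [false] [true].
Proof. rigsimp. apply rho_b. Qed.
Lemma rho_r1 : maps_rigidly rho [true] [false].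
Proof. rigsimp. apply rho_b. Qed.

Lemma mr_comp3 (f g h : Cantor -> Cantor) u v w z :
  maps_rigidly h u v -> maps_rigidly g v w -> maps_rigidly f w z -> maps_rigidly (fun x => f (g (h x))) u z.
Proof. intros H1 H2 H3 y. rewrite H1, H2. apply H3. Qed.

Definition isrot (k : nat) (t : nat) (r : Cantor -> Cantor) : Prop :=
  forall j, j < k -> maps_rigidly r (c k j) (c k ((j + t) mod k)).

Lemma mr_eq (f : Cantor -> Cantor) u v u' v' : maps_rigidly f u v -> u = u' -> v = v' -> maps_rigidly f u' v'.
Proof. intros H -> ->; auto. Qed.

Lemma rot_ex k : 1 <= k -> exists r, Gen S0 r /\ isrot k 1 r.
Proof.
  intros Hk. induction k as [|k IH]; [lia|].
  destruct k as [|k].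
  { exists (fun x => x). split. apply Gen_id. intros j Hj. replace j with 0 by lia. apply mr_id. }
  destruct k as [|k].
  { exists rho. split. apply Gen_rho. intros j Hj. destruct j as [|[|j]]; try lia.
    - apply rho_r0. - apply rho_r1. }
  destruct k as [|k].
  { exists (fun x => rho (Ainv x)). split. apply Gen_comp. apply Gen_rho. apply Gen_Ainv.
    intros j Hj. destruct j as [|[|[|j]]]; try lia; simpl.
    - eapply mr_comp. apply Ainv_r0. apply (mr_ext rho [false] [true] [false] rho_r0).
    - eapply mr_comp. apply Ainv_r10. apply (mr_ext rho [false] [true] [true] rho_r0).
    - eapply mr_comp. apply Ainv_r11. apply rho_r1. }
  destruct IH as [r' [Gr' Hr']]; [lia|].
  exists (fun x => x1 (r' (Ainv x))). split.
  { apply Gen_comp. apply Gen_x1. apply Gen_comp; auto. apply Gen_Ainv. }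
  intros j Hj. destruct j as [|[|j]].
  - replace ((0 + 1) mod S (S (S (S k)))) with 1 by (rewrite Nat.mod_small by lia; lia).
    specialize (Hr' 0). rewrite Nat.mod_small in Hr' by lia. cbn [Nat.add] in Hr'.
    apply (mr_comp3 x1 r' Ainv _ [false; false] [true; false; false]).
    + rewrite c_0. apply Ainv_r0.
    + apply (mr_ext r' [false] [true; false] [false]).
      rewrite c_0, c_S, c_0 in Hr'. apply Hr'; lia.
    + rewrite c_S, c_0. apply x1_r100.
  - replace ((1 + 1) mod S (S (S (S k)))) with 2 by (rewrite Nat.mod_small by lia; lia).
    specialize (Hr' 0). rewrite Nat.mod_small in Hr' by lia. cbn [Nat.add] in Hr'.
    apply (mr_comp3 x1 r' Ainv _ [false; true] [true; false; true]).
    + rewrite c_S, c_0. apply Ainv_r10.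
    + apply (mr_ext r' [false] [true; false] [true]).
      rewrite c_0, c_S, c_0 in Hr'. apply Hr'; lia.
    + rewrite !c_S, c_0. apply x1_r101.
  - assert (Hc : c (S (S (S (S k)))) (S (S j)) = [true; true] ++ c (S (S k)) j) by (rewrite !c_S; reflexivity).
    rewrite Hc. specialize (Hr' (S j)).
    destruct (Nat.eq_dec j (S k)) as [E|E].
    + subst j. replace ((S (S (S k)) + 1) mod S (S (S (S k)))) with 0 by
        (rewrite Nat.add_1_r; symmetry; apply Nat.mod_same; lia).
      replace ((S (S k) + 1) mod S (S (S k))) with 0 in Hr' by
        (rewrite Nat.add_1_r; symmetry; apply Nat.mod_same; lia).
      apply (mr_comp3 x1 r' Ainv _ (c (S (S (S k))) (S (S k))) [false]).
      * eapply mr_eq; [apply (mr_ext _ _ _ (c (S (S k)) (S k)) Ainv_r11)|reflexivity|symmetry; apply c_S].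
      * rewrite c_0 in Hr'. apply Hr'; lia.
      * rewrite c_0. apply x1_r0.
    + replace ((S (S j) + 1) mod S (S (S (S k)))) with (S (S (S j))) by (rewrite Nat.mod_small by lia; lia).
      replace ((S j + 1) mod S (S (S k))) with (S (S j)) in Hr' by (rewrite Nat.mod_small by lia; lia).
      assert (Hc2 : c (S (S (S k))) (S (S j)) = [true; true] ++ c (S k) j) by (rewrite !c_S; reflexivity).
      assert (Hc3 : c (S (S (S (S k)))) (S (S (S j))) = [true; true; true] ++ c (S k) j) by (rewrite !c_S; reflexivity).
      apply (mr_comp3 x1 r' Ainv _ (c (S (S (S k))) (S j)) (c (S (S (S k))) (S (S j)))).
      * eapply mr_eq; [apply (mr_ext _ _ _ (c (S (S k)) j) Ainv_r11)|reflexivity|symmetry; apply c_S].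
      * apply Hr'; lia.
      * rewrite Hc2, Hc3. apply mr_ext, x1_r11.
Qed.

Lemma rotpow_ex k t : 1 <= k -> exists r, Gen S0 r /\ isrot k t r.
Proof.
  intros Hk. induction t.
  - exists (fun x => x). split. apply Gen_id. intros j Hj. rewrite Nat.add_0_r, Nat.mod_small by lia. apply mr_id.
  - destruct IHt as [r [Gr Hr]]. destruct (rot_ex k Hk) as [r1 [G1 H1]].
    exists (fun x => r1 (r x)). split. apply Gen_comp; auto.
    intros j Hj. eapply mr_comp. apply Hr; auto.
    eapply mr_eq. apply H1. apply Nat.mod_upper_bound; lia. reflexivity.
    f_equal. rewrite Nat.add_mod_idemp_l by lia. f_equal. lia.
Qed.

Definition PC (Q : list word) : Prop :=
  NoDup Q /\ (forall x, exists w, In w Q /\ in_cone w x) /\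
  (forall w w' x, In w Q -> In w' Q -> in_cone w x -> in_cone w' x -> w = w').

Lemma max_word (Q : list word) : Q <> [] -> exists q, In q Q /\ forall u, In u Q -> length u <= length q.
Proof.
  induction Q as [|a Q IH]; intros H; [congruence|].
  destruct Q as [|b Q'].
  - exists a. split; simpl; auto. intros u [<-|[]]; auto.
  - destruct IH as [q [Hq Hm]]; [congruence|].
    destruct (Nat.le_ge_cases (length a) (length q)).
    + exists q. split; simpl; auto. intros u [<-|Hu]; auto.
    + exists a. split; simpl; auto. intros u [<-|Hu]; auto. specialize (Hm u Hu). lia.
Qed.

Lemma in_cone_ext_bit w x : in_cone w x -> in_cone (w ++ [x (length w)]) x.
Proof.
  intros H. apply in_cone_app. split; auto. rewrite in_cone_cons. split.
  unfold dropn. rewrite Nat.add_0_r; auto. apply in_cone_nil.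
Qed.

Lemma in_cone_app_l u s y : in_cone u (app_word (u ++ s) y).
Proof. rewrite app_app. apply in_cone_app_word. Qed.

Lemma siblings Q : PC Q -> 2 <= length Q -> exists w, In (w ++ [false]) Q /\ In (w ++ [true]) Q.
Proof.
  intros [ND [Cov Dis]] HL.
  destruct (max_word Q) as [q [Hq Hm]]. { intros E; subst; simpl in HL; lia. }
  destruct (list_eq_dec bool_dec q []) as [Eq|Nq].
  - exfalso. subst q. destruct Q as [|a [|b Q]]; simpl in HL; try lia.
    assert (a = []) by (apply length_zero_iff_nil; specialize (Hm a (or_introl eq_refl)); simpl in Hm; lia).
    assert (b = []) by (apply length_zero_iff_nil; specialize (Hm b (or_intror (or_introl eq_refl))); simpl in Hm; lia).
    subst. inversion ND. simpl in *; tauto.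
  - destruct (exists_last Nq) as [w [b Hw]]. subst q.
    set (x := app_word (w ++ [negb b]) zeros).
    destruct (Cov x) as [u [Hu Hcu]].
    assert (Hx : in_cone (w ++ [negb b]) x) by apply in_cone_app_word.
    assert (Hlu : length u <= length w + 1) by (specialize (Hm u Hu); rewrite length_app in Hm; simpl in Hm; lia).
    assert (Hu2 : u = w ++ [negb b]).
    { destruct (Nat.eq_dec (length u) (length w + 1)) as [E|E].
      - apply (cone_len_eq u _ x); auto. rewrite length_app; simpl; lia.
      - exfalso. assert (Hwx : in_cone w x) by (apply in_cone_app in Hx; tauto).
        destruct (cone_prefix u w x Hcu Hwx) as [s Hs]; [lia|].
        set (y := app_word (w ++ [b]) zeros).
        assert (E2 : u = w ++ [b]).
        { apply (Dis u (w ++ [b]) y Hu Hq).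
          - unfold y. rewrite Hs, <- app_assoc. apply in_cone_app_l.
          - apply in_cone_app_word. }
        subst u. rewrite length_app in E; simpl in E; lia. }
    subst u. exists w. destruct b; simpl in *; auto.
Qed.

Lemma single_code w : PC [w] -> w = [].
Proof.
  intros [_ [Cov _]]. destruct w as [|b w]; auto. exfalso.
  destruct (Cov (bcons (negb b) zeros)) as [u [[<-|[]] Hc]].
  rewrite in_cone_cons in Hc. destruct Hc as [H _]. destruct b; discriminate.
Qed.

Lemma rot_shift_nz K a b : a < K -> b < K -> a <> b -> (a + (K - b)) mod K <> 0.
Proof.
  intros Ha Hb Hab. destruct (Nat.lt_ge_cases a b).
  - rewrite Nat.mod_small by lia. lia.
  - replace (a + (K - b)) with ((a - b) + 1 * K) by lia. rewrite Nat.Div0.mod_add.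
    rewrite Nat.mod_small by lia. lia.
Qed.

Lemma rot_shift_z K b : b < K -> (b + (K - b)) mod K = 0.
Proof. intros H. replace (b + (K - b)) with K by lia. apply Nat.Div0.mod_same. Qed.

Lemma hQ : forall n Q, length Q = n -> PC Q ->
  exists h, Gen S0 h /\ forall w, In w Q -> exists j, j < n /\ maps_rigidly h w (c n j).
Proof.
  induction n as [|n IH]; intros Q HL HP.
  { destruct Q; simpl in HL; [|lia]. destruct HP as [_ [Cov _]]. destruct (Cov zeros) as [w [[] _]]. }
  destruct n as [|n].
  { destruct Q as [|w [|]]; simpl in HL; try lia.
    rewrite (single_code w HP) in *. exists (fun x => x). split. apply Gen_id.
    intros u [<-|[]]. exists 0. split; auto. apply mr_id. }
  destruct (siblings Q HP) as [w [H0 H1]]; [lia|].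
  set (w0 := w ++ [false]) in *. set (w1 := w ++ [true]) in *.
  destruct HP as [ND [Cov Dis]].
  destruct (in_split _ _ H0) as [l1 [l2 E1]].
  assert (Hw1 : In w1 (l1 ++ l2)).
  { assert (In w1 (l1 ++ w0 :: l2)) by (rewrite <- E1; auto).
    apply in_app_or in H. apply in_or_app. destruct H as [H|[H|H]]; auto.
    exfalso. unfold w0, w1 in H. apply app_inv_head in H. discriminate. }
  destruct (in_split _ _ Hw1) as [m1 [m2 E2]].
  remember (m1 ++ m2) as R eqn:ER.
  assert (Pm : Permutation Q (w0 :: w1 :: R)).
  { rewrite E1. eapply perm_trans. apply Permutation_sym, Permutation_middle.
    constructor. rewrite E2, ER. apply Permutation_sym, Permutation_middle. }
  assert (InQ : forall u, In u Q <-> u = w0 \/ u = w1 \/ In u R).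
  { intros u. split; intros Hu.
    - apply (Permutation_in _ Pm) in Hu. simpl in Hu. intuition.
    - apply (Permutation_in _ (Permutation_sym Pm)). simpl. intuition. }
  assert (ND2 : NoDup (w0 :: w1 :: R)) by (eapply Permutation_NoDup; eauto).
  assert (nR0 : ~ In w0 R /\ ~ In w1 R /\ NoDup R).
  { pose proof ND2 as T. apply NoDup_cons_iff in T as [T1 T2]. apply NoDup_cons_iff in T2 as [T3 T4].
    simpl in T1. tauto. }
  destruct nR0 as [nR0 [nR1 NDR]].
  assert (LR : length R = n).
  { pose proof (Permutation_length Pm) as PL. simpl in PL. rewrite HL in PL. injection PL; auto. }
  assert (Hw0c : forall x, in_cone w0 x -> in_cone w x) by (intros x Hx; apply in_cone_app in Hx; tauto).
  assert (Hw1c : forall x, in_cone w1 x -> in_cone w x) by (intros x Hx; apply in_cone_app in Hx; tauto).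
  assert (wR : ~ In w R).
  { intros Hin. assert (E : w = w0).
    { apply (Dis w w0 (app_word w0 zeros)). apply InQ; auto. auto.
      unfold w0. apply in_cone_app_l. apply in_cone_app_word. }
    assert (length w = length w0) by congruence. unfold w0 in H. rewrite length_app in H. simpl in H; lia. }
  assert (wbit : forall x, in_cone w x -> In (w ++ [x (length w)]) Q /\ in_cone (w ++ [x (length w)]) x).
  { intros x Hx. split. destruct (x (length w)); auto. apply in_cone_ext_bit; auto. }
  assert (PQ' : PC (w :: R)).
  { split; [|split].
    - constructor; auto.
    - intros x. destruct (Cov x) as [u [Hu Hc]]. apply InQ in Hu. destruct Hu as [->|[->|Hu]].
      + exists w. simpl; auto.
      + exists w. simpl; auto.
      + exists u. simpl; auto.
    - assert (notR : forall x, in_cone w x -> ~ In (w ++ [x (length w)]) R).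
      { intros x Hx Hin. destruct (x (length w)); [apply nR1|apply nR0]; simpl; auto. }
      intros u u' x [<-|Hu] [<-|Hu'] Hc Hc'; auto.
      + exfalso. destruct (wbit x Hc) as [Q1 Q2].
        assert (u' = w ++ [x (length w)]) by (apply (Dis u' _ x); auto; apply InQ; auto).
        apply (notR x Hc). rewrite <- H; exact Hu'.
      + exfalso. destruct (wbit x Hc') as [Q1 Q2].
        assert (u = w ++ [x (length w)]) by (apply (Dis u _ x); auto; apply InQ; auto).
        apply (notR x Hc'). rewrite <- H; exact Hu.
      + apply (Dis u u' x); auto; apply InQ; auto. }
  destruct n as [|n].
  {
    destruct R as [|r R]; simpl in LR; [|lia].
    assert (w = []) by (apply single_code; auto). subst w.
    exists (fun x => x). split. apply Gen_id. intros u Hu. apply InQ in Hu.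
    destruct Hu as [->|[->|[]]].
    - exists 0. split; auto. apply mr_id.
    - exists 1. split; auto. apply mr_id. }
  destruct (IH (w :: R)) as [h' [Gh' Hh']]; [simpl; f_equal; exact LR|auto|].
  destruct (Hh' w) as [jw [Hjw Mw]]; [simpl; auto|].
  set (K := S (S n)) in *.
  destruct (rotpow_ex K (K - jw)) as [r [Gr Hr]]; [unfold K; lia|].
  assert (h'T : inT h') by (apply (Gen_T S0); auto; apply S0_T).
  exists (fun x => A (r (h' x))). split.
  { apply Gen_comp. apply Gen_A. apply Gen_comp; auto. }
  intros u Hu. apply InQ in Hu. destruct Hu as [->|[->|Hu]].
  - exists 0. split; [lia|].
    apply (mr_comp3 A r h' _ (c K jw ++ [false]) [false; false]).
    + apply mr_ext; auto.
    + apply (mr_ext r _ [false] [false]). apply (mr_eq r (c K jw) (c K ((jw + (K - jw)) mod K)));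
      [apply Hr; exact Hjw|reflexivity|rewrite rot_shift_z by auto; reflexivity].
    + apply A_r00.
  - exists 1. split; [lia|].
    apply (mr_comp3 A r h' _ (c K jw ++ [true]) [false; true]).
    + apply mr_ext; auto.
    + apply (mr_ext r _ [false] [true]). apply (mr_eq r (c K jw) (c K ((jw + (K - jw)) mod K)));
      [apply Hr; exact Hjw|reflexivity|rewrite rot_shift_z by auto; reflexivity].
    + apply A_r01.
  - destruct (Hh' u) as [ju [Hju Mu]]; [simpl; auto|].
    assert (Hne : ju <> jw).
    { intros ->. assert (E : app_word u zeros = app_word w zeros).
      { apply (inT_inj h'); auto. rewrite Mu, Mw. reflexivity. }
      apply wR. replace w with u; auto. destruct PQ' as [_ [_ D]].
      apply (D u w (app_word w zeros)); simpl; auto. rewrite <- E. apply in_cone_app_word.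
      apply in_cone_app_word. }
    pose proof (rot_shift_nz K ju jw Hju Hjw Hne) as Hnz.
    destruct ((ju + (K - jw)) mod K) as [|i] eqn:Ei; [congruence|].
    assert (Hi : S i < K) by (rewrite <- Ei; apply Nat.mod_upper_bound; unfold K; lia).
    exists (S (S i)). split; [lia|].
    apply (mr_comp3 A r h' _ (c K ju) (c K (S i))).
    + auto.
    + rewrite <- Ei. apply Hr; auto.
    + unfold K. rewrite !c_S. apply (mr_ext A [true] [true; true] (c (S n) i) A_r1).
Qed.

Lemma mono_id K (f : nat -> nat) : (forall i, 1 <= i <= K -> 1 <= f i <= K) ->
  (forall i j, 1 <= i -> i < j -> j <= K -> f i < f j) -> forall i, 1 <= i <= K -> f i = i.
Proof.
  intros Hr Hm.
  assert (Lo : forall i, 1 <= i <= K -> i <= f i).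
  { induction i; intros Hi; [lia|]. destruct (Nat.eq_dec i 0). subst; specialize (Hr 1); lia.
    specialize (Hm i (S i)). assert (i <= f i) by (apply IHi; lia). assert (f i < f (S i)) by (apply Hm; lia). lia. }
  assert (Hi2 : forall d, 1 <= K - d -> d <= K -> f (K - d) <= K - d).
  { induction d; intros H1 H2. rewrite Nat.sub_0_r. specialize (Hr K); lia.
    assert (f (K - d) <= K - d) by (apply IHd; lia).
    assert (f (K - S d) < f (K - d)) by (apply Hm; lia). lia. }
  intros i Hi. specialize (Lo i Hi). specialize (Hi2 (K - i)). replace (K - (K - i)) with i in Hi2 by lia.
  assert (f i <= i) by (apply Hi2; lia). lia.
Qed.

Definition X (k m : nat) : Cantor := app_word (c k m) zeros.

Lemma lexX k a b : a < k -> b < k -> lex_lt (X k a) (X k b) -> a < b.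
Proof.
  intros Ha Hb H. destruct (lt_eq_lt_dec a b) as [[E|E]|E]; auto.
  - subst. exfalso. exact (lex_irrefl _ H).
  - exfalso. apply (lex_asym _ _ H). apply c_lex; auto.
Qed.

Lemma cycX k a b : a < k -> b < k -> cyc (X k 0) (X k a) (X k b) -> 0 < a /\ a < b.
Proof.
  intros Ha Hb [[H1 H2]|[[H1 H2]|[H1 H2]]].
  - apply lexX in H1; try lia. apply lexX in H2; try lia.
  - apply lexX in H2; lia.
  - apply lexX in H1; lia.
Qed.

Lemma perm_rot k q : 1 <= k -> inT q ->
  (forall j, j < k -> exists j', j' < k /\ maps_rigidly q (c k j) (c k j')) ->
  exists r, Gen S0 r /\ forall x, r (q x) = x.
Proof.
  intros Hk Hq Hp.
  assert (Hp' : forall j, exists j', j < k -> j' < k /\ maps_rigidly q (c k j) (c k j')).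
  { intros j. destruct (lt_dec j k) as [Hj|Hj].
    - destruct (Hp j Hj) as [j' H]. exists j'. auto.
    - exists 0. intros; lia. }
  set (pi := fun j => proj1_sig (constructive_indefinite_description _ (Hp' j))).
  assert (Hpi : forall j, j < k -> pi j < k /\ maps_rigidly q (c k j) (c k (pi j))).
  { intros j Hj. unfold pi. destruct (constructive_indefinite_description _ (Hp' j)). simpl. auto. }
  destruct (rotpow_ex k (k - pi 0) Hk) as [r [Gr Hr]].
  set (sg := fun j => (pi j + (k - pi 0)) mod k).
  assert (Hsg : forall j, j < k -> sg j < k /\ maps_rigidly (fun x => r (q x)) (c k j) (c k (sg j))).
  { intros j Hj. destruct (Hpi j Hj) as [H1 H2]. split. apply Nat.mod_upper_bound; lia.
    eapply mr_comp; eauto. }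
  assert (Hs0 : sg 0 = 0) by (unfold sg; apply rot_shift_z; apply Hpi; lia).
  assert (rT : inT r) by (apply (Gen_T S0); auto; apply S0_T).
  assert (pT : inT (fun x => r (q x))) by (apply inT_comp; auto).
  assert (HX : forall m, m < k -> r (q (X k m)) = X k (sg m)).
  { intros m Hm. unfold X. apply (proj2 (Hsg m Hm)). }
  assert (Hid : forall i, 1 <= i <= k - 1 -> sg i = i).
  { apply mono_id.
    - intros i Hi. split; [|destruct (Hsg i); lia].
      destruct (Nat.eq_dec (sg i) 0) as [E|E]; [|lia]. exfalso.
      assert (E2 : X k i = X k 0).
      { apply (inT_inj _ _ _ pT). rewrite !HX by lia. rewrite E, Hs0. reflexivity. }
      assert (L0 : lex_lt (X k 0) (X k i)) by (apply c_lex; lia).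
      rewrite E2 in L0. exact (lex_irrefl _ L0).
    - intros i j Hi Hij Hj.
      assert (Hc : cyc (X k 0) (X k i) (X k j)).
      { left. split; apply c_lex; lia. }
      apply (proj2 pT) in Hc. rewrite !HX in Hc by lia. rewrite Hs0 in Hc.
      apply cycX in Hc; try lia; apply Hsg; lia. }
  exists r. split; auto. intros x. destruct (c_cover k x Hk) as [j [Hj Hc]].
  rewrite (cone_decomp _ _ Hc). rewrite (proj2 (Hsg j Hj)).
  destruct (Nat.eq_dec j 0) as [->|Hj0]. rewrite Hs0; auto. rewrite Hid by lia. reflexivity.
Qed.

Fixpoint allw (n : nat) : list word :=
  match n with 0 => [[]] | S n => map (cons false) (allw n) ++ map (cons true) (allw n) end.

Lemma allw_len n : length (allw n) = 2 ^ n.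
Proof. unfold word in *. induction n; simpl; auto. rewrite length_app, !length_map, IHn. lia. Qed.

Lemma allw_in n u : In u (allw n) <-> length u = n.
Proof.
  revert u; induction n; intros u; simpl.
  - split. intros [<-|[]]; auto. intros H. destruct u; simpl in H; auto; lia.
  - rewrite in_app_iff, !in_map_iff. split.
    + intros [[v [<- Hv]]|[v [<- Hv]]]; simpl; f_equal; apply IHn; auto.
    + intros H. destruct u as [|b u]; simpl in H; [lia|]. injection H as H.
      destruct b; [right|left]; exists u; split; auto; apply IHn; auto.
Qed.

Lemma NoDup_map_in {A B} (f : A -> B) l : (forall a b, In a l -> In b l -> f a = f b -> a = b) ->
  NoDup l -> NoDup (map f l).
Proof.
  induction l as [|a l IH]; intros Hi Hn; simpl; constructor.
  - intros Hin. apply in_map_iff in Hin. destruct Hin as [b [E Hb]].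
    inversion Hn; subst. assert (b = a) by (apply Hi; simpl; auto). subst. contradiction.
  - apply IH. intros; apply Hi; simpl; auto. inversion Hn; auto.
Qed.

Lemma allw_nodup n : NoDup (allw n).
Proof.
  induction n; simpl. constructor. intros []. constructor.
  apply NoDup_app. apply NoDup_map_in; auto. intros a b _ _ E; injection E; auto.
  apply NoDup_map_in; auto. intros a b _ _ E; injection E; auto.
  intros u Hu1 Hu2. apply in_map_iff in Hu1, Hu2. destruct Hu1 as [a [<- _]], Hu2 as [b [E _]]. discriminate.
Qed.

Lemma allw_PC n : PC (allw n).
Proof.
  split; [apply allw_nodup|split].
  - intros x. exists (pre n x). split. apply allw_in, pre_len. apply pre_cone.
  - intros w w' x Hw Hw' Hc Hc'. apply allw_in in Hw, Hw'. apply (cone_len_eq w w' x); auto; congruence.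
Qed.

Theorem gen_T g : inT g -> Gen S0 g.
Proof.
  intros Hg. destruct (inT_inv_ex2 g Hg) as [gi [Tgi [GI1 GI2]]].
  destruct (compact g (inT_locrig g Hg)) as [N HN].
  assert (Hex : forall u, exists v, length u = N -> maps_rigidly g u v).
  { intros u. destruct (Nat.eq_dec (length u) N) as [E|E].
    - destruct (HN u E) as [v Hv]. exists v; auto.
    - exists []. intros; contradiction. }
  set (f := fun u => proj1_sig (constructive_indefinite_description _ (Hex u))).
  assert (Hf : forall u, length u = N -> maps_rigidly g u (f u)).
  { intros u Hu. unfold f. destruct (constructive_indefinite_description _ (Hex u)). simpl. auto. }
  set (Q := map f (allw N)).
  assert (Hpt : forall u y, length u = N -> g (app_word u y) = app_word (f u) y) by (intros; apply Hf; auto).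
  assert (PQ : PC Q).
  { split; [|split].
    - apply NoDup_map_in; [|apply allw_nodup]. intros a b Ha Hb E.
      apply allw_in in Ha, Hb.
      assert (E2 : app_word a zeros = app_word b zeros).
      { apply (inT_inj g); auto. rewrite !Hpt by auto. rewrite E. reflexivity. }
      apply (cone_len_eq a b (app_word a zeros)). apply in_cone_app_word. rewrite E2. apply in_cone_app_word. congruence.
    - intros x. set (z := gi x). exists (f (pre N z)). split.
      + apply in_map. apply allw_in, pre_len.
      + rewrite <- (GI2 x). fold z.
        assert (Ez : g z = app_word (f (pre N z)) (dropn (length (pre N z)) z)).
        { rewrite <- Hpt by apply pre_len. f_equal. apply cone_decomp, pre_cone. }
        rewrite Ez. apply in_cone_app_word.
    - intros w w' x Hw Hw' Hc Hc'. unfold Q in Hw, Hw'. apply in_map_iff in Hw, Hw'.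
      destruct Hw as [a [<- Ha]], Hw' as [b [<- Hb]]. apply allw_in in Ha, Hb.
      assert (Ea : x = g (app_word a (dropn (length (f a)) x))).
      { rewrite Hpt by auto. apply cone_decomp; auto. }
      assert (Eb : x = g (app_word b (dropn (length (f b)) x))).
      { rewrite Hpt by auto. apply cone_decomp; auto. }
      assert (E : app_word a (dropn (length (f a)) x) = app_word b (dropn (length (f b)) x)).
      { apply (inT_inj g); auto. rewrite <- Ea. auto. }
      assert (a = b).
      { apply (cone_len_eq a b (app_word a (dropn (length (f a)) x))). apply in_cone_app_word.
        rewrite E. apply in_cone_app_word. congruence. }
      subst; reflexivity. }
  set (k := 2 ^ N).
  assert (Hk : 1 <= k) by (unfold k; pose proof (Nat.pow_nonzero 2 N); lia).
  assert (LQ : length Q = k) by (unfold Q, k; rewrite length_map, allw_len; reflexivity).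
  destruct (hQ k Q LQ PQ) as [h1 [G1 H1]].
  destruct (hQ k (allw N) (allw_len N) (allw_PC N)) as [h2 [G2 H2]].
  assert (T1 : inT h1) by (apply (Gen_T S0); auto; apply S0_T).
  assert (T2 : inT h2) by (apply (Gen_T S0); auto; apply S0_T).
  destruct (inT_inv_ex2 h2 T2) as [h2i [T2i [I1 I2]]].
  set (q := fun x => h1 (g (h2i x))).
  assert (Tq : inT q) by (unfold q; apply (inT_comp h1 (fun x => g (h2i x))); [auto | apply inT_comp; auto]).
  assert (Pq : forall j, j < k -> exists j', j' < k /\ maps_rigidly q (c k j) (c k j')).
  { intros j Hj. set (x := X k j). set (z := h2i x). set (u := pre N z).
    assert (Hu : In u (allw N)) by (apply allw_in, pre_len).
    destruct (H2 u Hu) as [t [Ht Mt]].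
    assert (Etj : t = j).
    { apply (c_disj k t j x); auto.
      - rewrite <- (I2 x). fold z.
        assert (Ez : h2 z = app_word (c k t) (dropn (length u) z)).
        { rewrite <- Mt. f_equal. apply cone_decomp, pre_cone. }
        rewrite Ez. apply in_cone_app_word.
      - apply in_cone_app_word. }
    subst t.
    destruct (H1 (f u)) as [s [Hs Ms]]. { apply in_map; auto. }
    exists s. split; auto. apply (mr_comp3 h1 g h2i _ u (f u)).
    - eapply mr_inv; eauto.
    - apply Hf, pre_len.
    - auto. }
  destruct (perm_rot k q Hk Tq Pq) as [r [Gr Hr]].
  set (m := fun x => r (h1 x)).
  assert (Gm : Gen S0 m) by (unfold m; apply (Gen_comp S0 r h1); auto).
  assert (Tm : inT m) by (apply (Gen_T S0); auto; apply S0_T).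
  destruct (inT_inv_ex2 m Tm) as [mi [Tmi [M1 M2]]].
  assert (Gmi : Gen S0 mi) by (apply (Gen_inv S0 m); auto; apply S0_T).
  apply (Gen_ext S0 (fun y => mi (h2 y))). apply Gen_comp; auto.
  intros y. rewrite <- (M1 (g y)). f_equal. unfold m. rewrite <- (Hr (h2 y)). unfold q. rewrite I1. reflexivity.
Qed.

Theorem S0_generates : generates_T S0.
Proof. split. apply S0_T. intros g Hg. apply gen_T, Hg. Qed.

Definition Dpos (g : Cantor -> Cantor) (p : Cantor) (d : nat) : Prop :=
  exists u v, in_cone u p /\ maps_rigidly g u v /\ length v = length u + d.

Lemma Dpos_unique g p d u' v' : Dpos g p d -> in_cone u' p -> maps_rigidly g u' v' ->
  length v' = length u' + d.
Proof.
  intros [u [v [Hc [Hr Hl]]]] Hc' Hr'. pose proof (mr_unique g u v u' v' p Hc Hc' Hr Hr'). lia.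
Qed.

Lemma conj_D k g h p d : inT k -> (forall x, k (g x) = h (k x)) -> g p = p ->
  Dpos g p d -> Dpos h (k p) d.
Proof.
  intros Hk Hc Hp [u [v [Hu [Hr Hl]]]].
  destruct (inT_locrig k Hk p) as [a [b [Ha Hab]]].
  set (M := length a + length u).
  set (r := pre M p).
  assert (Hrp : in_cone r p) by apply pre_cone.
  assert (Lr : length r = M) by apply pre_len.
  destruct (cone_prefix u r p Hu Hrp) as [t Ht]; [unfold M in *; lia|].
  destruct (cone_prefix a r p Ha Hrp) as [s' Hs']; [unfold M in *; lia|].
  set (p' := dropn M p).
  assert (Ep : p = app_word r p') by (unfold p'; rewrite <- Lr; apply cone_decomp; auto).
  assert (Hvt : in_cone (v ++ t) p).
  { rewrite <- Hp. rewrite Ep at 1. rewrite Ht, app_app, Hr, <- app_app. apply in_cone_app_word. }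
  assert (Lt : length r = length u + length t) by (rewrite Ht, length_app; auto).
  assert (Ls' : length r = length a + length s') by (rewrite Hs', length_app; auto).
  destruct (cone_prefix a (v ++ t) p Ha Hvt) as [s Hs]. { rewrite length_app. unfold M in *. lia. }
  assert (Ls : length v + length t = length a + length s) by (rewrite <- length_app, Hs, length_app; auto).
  exists (b ++ s'), (b ++ s). split; [|split].
  - rewrite Ep, Hs', app_app, Hab, <- app_app. apply in_cone_app_word.
  - intros y. rewrite app_app, <- Hab, <- app_app, <- Hs', <- Hc.
    rewrite Ht, app_app, Hr, <- app_app, Hs, app_app, Hab, app_app. reflexivity.
  - rewrite !length_app. lia.
Qed.

Definition Mk : Cantor -> Cantor := L false (pw 3 A).
Definition ddc (c : bool) : nat := if c then 2 else 1.
Definition Bc (c : bool) : Cantor -> Cantor := L true (L false (pw (ddc c) A)).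
Fixpoint Hf (bs : list bool) : Cantor -> Cantor :=
  match bs with
  | [] => fun x => x
  | c :: bs => fun x => Bc c (A (Hf bs (Ainv x)))
  end.
Definition gfam (b : list bool) : Cantor -> Cantor := fun x => Mk (Hf b x).
Definition dd (b : list bool) (i : nat) : nat :=
  match i with 0 => 3 | S j => ddc (nth j b false) end.
Definition Tw (i : nat) (y : Cantor) : Cantor := app_word (repeat true i) y.

Lemma Tw_S i y : Tw (S i) y = bcons true (Tw i y).
Proof. unfold Tw. simpl. apply app_cons. Qed.
Lemma Tw_0 y : Tw 0 y = y.
Proof. apply app_nil. Qed.

Lemma pw_mono_A d : mono (pw d A).
Proof. apply pw_mono, A_mono. Qed.

Lemma Mk_TM : inT Mk /\ mono Mk.
Proof. apply L_T. apply pw_T, A_T. apply pw_mono_A. Qed.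
Lemma Bc_TM c : inT (Bc c) /\ mono (Bc c).
Proof. apply L_T; apply L_T; [apply pw_T, A_T | apply pw_mono_A | apply pw_T, A_T | apply pw_mono_A]. Qed.

Lemma Hf_T bs : inT (Hf bs).
Proof.
  induction bs; simpl. apply inT_id.
  apply (inT_comp (Bc a)). apply Bc_TM. apply (inT_comp A). apply A_T. apply inT_comp; auto. apply Ainv_T.
Qed.
Lemma gfam_T b : inT (gfam b).
Proof. unfold gfam. apply (inT_comp Mk). apply Mk_TM. apply Hf_T. Qed.

Lemma Bc_0 c y : Bc c (bcons false y) = bcons false y.
Proof. unfold Bc. apply (L_out true). Qed.
Lemma Bc_10 c y : Bc c (bcons true (bcons false y)) = bcons true (bcons false (pw (ddc c) A y)).
Proof. unfold Bc. rewrite L_in. rewrite L_in. reflexivity. Qed.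
Lemma Bc_11 c y : Bc c (bcons true (bcons true y)) = bcons true (bcons true y).
Proof. unfold Bc. rewrite L_in. rewrite (L_out false). reflexivity. Qed.

Lemma Hf_0 bs y : Hf bs (bcons false y) = bcons false y.
Proof.
  revert y; induction bs; intros y; simpl; auto.
  rewrite Ainv_0, IHbs, A_00, Bc_0. reflexivity.
Qed.

Lemma Hf_1 bs i y : 1 <= i <= length bs ->
  Hf bs (Tw i (bcons false y)) = Tw i (bcons false (pw (dd bs i) A y)).
Proof.
  revert i y; induction bs as [|c bs IH]; intros i y Hi; simpl in Hi; [lia|].
  destruct i as [|[|i]]; [lia| |].
  - simpl Hf. rewrite Tw_S, Tw_0, Ainv_10, Hf_0, A_01, Bc_10, Tw_S, Tw_0. reflexivity.
  - simpl Hf. rewrite !Tw_S, Ainv_11, <- Tw_S, IH by lia. rewrite Tw_S, A_1, Bc_11, <- !Tw_S. reflexivity.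
Qed.

Lemma Hf_last bs y : Hf bs (Tw (S (length bs)) y) = Tw (S (length bs)) y.
Proof.
  revert y; induction bs as [|c bs IH]; intros y; simpl; auto.
  rewrite !Tw_S, Ainv_11, <- Tw_S, IH, Tw_S, A_1, Bc_11. reflexivity.
Qed.

Lemma gfam_i b i y : i <= length b ->
  gfam b (Tw i (bcons false y)) = Tw i (bcons false (pw (dd b i) A y)).
Proof.
  intros Hi. unfold gfam. destruct i as [|i].
  - rewrite !Tw_0, Hf_0. unfold Mk. rewrite (L_in false). reflexivity.
  - rewrite Hf_1 by lia. rewrite !Tw_S. unfold Mk. apply (L_out false).
Qed.

Lemma gfam_last b y : gfam b (Tw (S (length b)) y) = Tw (S (length b)) y.
Proof. unfold gfam. rewrite Hf_last, Tw_S. unfold Mk. apply (L_out false). Qed.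

Lemma Tw_app i w y : Tw i (app_word w y) = app_word (repeat true i ++ w) y.
Proof. unfold Tw. rewrite app_app. reflexivity. Qed.

Lemma app_rep_ones d : app_word (repeat true d) ones = ones.
Proof. induction d; simpl. apply app_nil. rewrite app_cons, IHd. symmetry; apply ones_eq. Qed.
Lemma app_rep_zeros d : app_word (repeat false d) zeros = zeros.
Proof. induction d; simpl. apply app_nil. rewrite app_cons, IHd. symmetry; apply zeros_eq. Qed.

Definition Pt (i : nat) : Cantor := Tw i (bcons false ones).

Lemma Pt_eq i : Pt i = app_word (repeat true i ++ [false; true]) ones.
Proof. unfold Pt, Tw. rewrite app_app. f_equal. rewrite !app_cons, app_nil, <- ones_eq. reflexivity. Qed.

Lemma dd_pos b i : 1 <= dd b i.
Proof. destruct i; simpl; [lia|]. unfold ddc; destruct (nth i b false); lia. Qed.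

Lemma gfam_fix_P b i : i <= length b -> gfam b (Pt i) = Pt i.
Proof.
  intros Hi. unfold Pt. rewrite gfam_i by auto. f_equal. f_equal.
  rewrite ones_eq, pwA_one, app_rep_ones. reflexivity.
Qed.

Lemma mr_one b i : i <= length b ->
  maps_rigidly (gfam b) (repeat true i ++ [false; true]) (repeat true i ++ false :: true :: repeat true (dd b i)).
Proof.
  intros Hi y. rewrite <- !Tw_app, !app_cons, gfam_i by auto. rewrite pwA_one, ?app_nil. reflexivity.
Qed.

Lemma mr_zero b i : i <= length b ->
  maps_rigidly (gfam b) (repeat true i ++ false :: repeat false (S (dd b i))) (repeat true i ++ [false; false]).
Proof.
  intros Hi y. rewrite <- !Tw_app, !app_cons, gfam_i by auto. rewrite app_nil.
  simpl repeat. rewrite app_cons. rewrite pwA_zero. reflexivity.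
Qed.

Lemma Dpos_P b i : i <= length b -> Dpos (gfam b) (Pt i) (dd b i).
Proof.
  intros Hi. exists (repeat true i ++ [false; true]), (repeat true i ++ false :: true :: repeat true (dd b i)).
  split; [|split].
  - rewrite Pt_eq. apply in_cone_app_word.
  - apply mr_one; auto.
  - rewrite !length_app. simpl. rewrite !repeat_length. lia.
Qed.

Lemma c_explicit k j : S j < k -> c k j = repeat true j ++ [false].
Proof. intros H. unfold c. apply Nat.ltb_lt in H. rewrite H. reflexivity. Qed.
Lemma c_explicit_last k : c (S k) k = repeat true k.
Proof. unfold c. rewrite Nat.ltb_irrefl. reflexivity. Qed.

Lemma fix_classify b x d : gfam b x = x -> Dpos (gfam b) x d -> 1 <= d ->
  exists i, i <= length b /\ x = Pt i /\ d = dd b i.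
Proof.
  intros Hfx HD Hd. set (n := length b).
  destruct (c_cover (S (S n)) x) as [j [Hj Hc]]; [lia|].
  destruct (Nat.eq_dec j (S n)) as [->|Hjn].
  - exfalso. rewrite c_explicit_last in Hc.
    assert (Hr : maps_rigidly (gfam b) (repeat true (S n)) (repeat true (S n))).
    { intros y. fold (Tw (S n) y). apply gfam_last. }
    pose proof (Dpos_unique _ _ _ _ _ HD Hc Hr). lia.
  - rewrite c_explicit in Hc by lia.
    set (y := dropn (length (repeat true j ++ [false])) x).
    assert (Ex : x = Tw j (bcons false y)).
    { rewrite (cone_decomp _ _ Hc) at 1. fold y. rewrite <- Tw_app, app_cons, app_nil. reflexivity. }
    assert (Hy : pw (dd b j) A y = y).
    { rewrite Ex in Hfx. rewrite gfam_i in Hfx by lia. unfold Tw in Hfx. apply app_inj in Hfx.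
      apply bcons_inj in Hfx. tauto. }
    destruct (pwA_fix (dd b j) y (dd_pos b j) Hy) as [Ez|Eo].
    + exfalso.
      assert (Hc0 : in_cone (repeat true j ++ false :: repeat false (S (dd b j))) x).
      { rewrite Ex, Ez. rewrite <- (app_rep_zeros (S (dd b j))) at 1. rewrite <- app_cons, Tw_app.
        apply in_cone_app_word. }
      pose proof (Dpos_unique _ _ _ _ _ HD Hc0 (mr_zero b j ltac:(lia))).
      rewrite !length_app in H. simpl in H. rewrite !repeat_length in H. lia.
    + exists j. split; [lia|]. assert (Ep : x = Pt j) by (rewrite Ex, Eo; reflexivity).
      split; auto.
      assert (Hc1 : in_cone (repeat true j ++ [false; true]) x).
      { rewrite Ep, Pt_eq. apply in_cone_app_word. }
      pose proof (Dpos_unique _ _ _ _ _ HD Hc1 (mr_one b j ltac:(lia))).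
      rewrite !length_app in H. simpl in H. rewrite !repeat_length in H. lia.
Qed.

Lemma conjT_refl g : conjT g g.
Proof. exists (fun x => x). split. apply inT_id. auto. Qed.

Lemma conjT_sym g h : conjT g h -> conjT h g.
Proof.
  intros [k [Hk E]]. destruct (inT_inv_ex2 k Hk) as [ki [Tki [K1 K2]]].
  exists ki. split; auto. intros x. rewrite <- (K2 x) at 1. rewrite <- E, K1. reflexivity.
Qed.

Lemma conjT_trans g h j : conjT g h -> conjT h j -> conjT g j.
Proof.
  intros [k1 [T1 E1]] [k2 [T2 E2]]. exists (fun x => k2 (k1 x)). split.
  apply inT_comp; auto. intros x. rewrite E1, E2. reflexivity.
Qed.

Lemma lexP i j : i < j -> lex_lt (Pt i) (Pt j).
Proof.
  revert j; induction i; intros j H; destruct j; try lia.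
  - unfold Pt. rewrite Tw_S, Tw_0. apply lex_ft.
  - unfold Pt in *. rewrite !Tw_S, lex_bb. apply IHi; lia.
Qed.

Lemma lexP_lt a b : lex_lt (Pt a) (Pt b) -> a < b.
Proof.
  intros H. destruct (lt_eq_lt_dec a b) as [[E|E]|E]; auto.
  - subst. exfalso. exact (lex_irrefl _ H).
  - exfalso. apply (lex_asym _ _ H). apply lexP; auto.
Qed.

Lemma cycP a b : cyc (Pt 0) (Pt a) (Pt b) -> 0 < a /\ a < b.
Proof.
  intros [[H1 H2]|[[H1 H2]|[H1 H2]]].
  - apply lexP_lt in H1. apply lexP_lt in H2. lia.
  - apply lexP_lt in H2; lia.
  - apply lexP_lt in H1; lia.
Qed.

Lemma Pt_inj i j : Pt i = Pt j -> i = j.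
Proof.
  intros E. destruct (lt_eq_lt_dec i j) as [[H|H]|H]; auto; exfalso.
  - pose proof (lexP i j H). rewrite E in H0. exact (lex_irrefl _ H0).
  - pose proof (lexP j i H). rewrite E in H0. exact (lex_irrefl _ H0).
Qed.

Lemma nonconj b b' : length b = length b' -> conjT (gfam b) (gfam b') -> b = b'.
Proof.
  intros HL [k [Hk E]]. set (n := length b).
  assert (Hex : forall i, exists j, i <= n -> j <= n /\ k (Pt i) = Pt j /\ dd b i = dd b' j).
  { intros i. destruct (le_lt_dec i n) as [Hi|Hi]; [|exists 0; intros; lia].
    assert (Fx : gfam b' (k (Pt i)) = k (Pt i)) by (rewrite <- E, gfam_fix_P; auto).
    assert (Dk : Dpos (gfam b') (k (Pt i)) (dd b i)).
    { apply (conj_D k (gfam b)); auto. apply gfam_fix_P; auto. apply Dpos_P; auto. }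
    destruct (fix_classify b' (k (Pt i)) (dd b i) Fx Dk (dd_pos b i)) as [j [Hj [E1 E2]]].
    exists j. intros _. split; [unfold n; lia|]. auto. }
  set (pi := fun i => proj1_sig (constructive_indefinite_description _ (Hex i))).
  assert (Hpi : forall i, i <= n -> pi i <= n /\ k (Pt i) = Pt (pi i) /\ dd b i = dd b' (pi i)).
  { intros i Hi. unfold pi. destruct (constructive_indefinite_description _ (Hex i)). simpl. auto. }
  assert (P0 : pi 0 = 0).
  { destruct (Hpi 0) as [_ [_ H]]; [lia|]. simpl in H. destruct (pi 0); auto.
    simpl in H. unfold ddc in H. destruct (nth n0 b' false); discriminate. }
  assert (Hid : forall i, 1 <= i <= n -> pi i = i).
  { apply mono_id.
    - intros i Hi. destruct (Hpi i) as [H1 [H2 _]]; [lia|]. split; auto.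
      destruct (Nat.eq_dec (pi i) 0) as [Z|Z]; [|lia]. exfalso.
      assert (Pt i = Pt 0).
      { apply (inT_inj k); auto. rewrite H2, Z. destruct (Hpi 0) as [_ [H3 _]]; [lia|]. rewrite H3, P0. reflexivity. }
      apply Pt_inj in H. lia.
    - intros i j Hi Hij Hj.
      assert (Hc : cyc (Pt 0) (Pt i) (Pt j)) by (left; split; apply lexP; lia).
      apply (proj2 Hk) in Hc.
      destruct (Hpi 0) as [_ [Q0 _]]; [lia|]. destruct (Hpi i) as [_ [Qi _]]; [lia|].
      destruct (Hpi j) as [_ [Qj _]]; [lia|].
      rewrite Q0, Qi, Qj, P0 in Hc. apply cycP in Hc. lia. }
  apply nth_ext with (d := false) (d' := false); auto.
  intros m Hm. destruct (Hpi (S m)) as [_ [_ H]]; [unfold n; lia|].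
  rewrite Hid in H by (unfold n; lia). simpl in H. unfold ddc in H.
  destruct (nth m b false), (nth m b' false); auto; discriminate.
Qed.

Definition letter := ((Cantor -> Cantor) * bool)%type.
Definition letters (S : list (Cantor -> Cantor)) : list letter :=
  flat_map (fun s => [(s, true); (s, false)]) S.

Fixpoint wlist (Lt : list letter) (n : nat) : list (list letter) :=
  match n with
  | 0 => [[]]
  | S n => [] :: flat_map (fun a => map (cons a) (wlist Lt n)) Lt
  end.

Lemma len_flat_map_cons (Lt : list letter) (W : list (list letter)) :
  length (flat_map (fun a => map (cons a) W) Lt) = length Lt * length W.
Proof. induction Lt; simpl; auto. rewrite length_app, length_map, IHLt. lia. Qed.

Lemma wlist_len Lt n : length (wlist Lt n) <= (length Lt + 1) ^ n.
Proof.
  induction n; simpl; auto. rewrite len_flat_map_cons.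
  pose proof (Nat.pow_nonzero (length Lt + 1) n). 
  assert (length Lt * length (wlist Lt n) <= length Lt * (length Lt + 1) ^ n) by (apply Nat.mul_le_mono_l; auto).
  nia.
Qed.

Lemma wlist_in Lt n w : length w <= n -> (forall p, In p w -> In p Lt) -> In w (wlist Lt n).
Proof.
  revert w; induction n; intros w Hl Hp; destruct w as [|a w]; simpl in *; auto; try lia.
  right. apply in_flat_map. exists a. split. apply Hp; auto. apply in_map. apply IHn; auto. lia.
Qed.

Lemma wlist_prop Lt n w : In w (wlist Lt n) -> length w <= n /\ (forall p, In p w -> In p Lt).
Proof.
  revert w; induction n; intros w Hw; simpl in Hw.
  - destruct Hw as [<-|[]]. simpl. split; auto. intros p [].
  - destruct Hw as [<-|Hw]. simpl. split; [lia|]. intros p [].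
    apply in_flat_map in Hw. destruct Hw as [a [Ha Hw]]. apply in_map_iff in Hw.
    destruct Hw as [w' [<- Hw']]. destruct (IHn w' Hw') as [H1 H2]. simpl. split; [lia|].
    intros p [<-|Hp]; auto.
Qed.

Lemma letters_in S p : In p (letters S) <-> In (fst p) S.
Proof.
  unfold letters. rewrite in_flat_map. split.
  - intros [s [Hs Hp]]. simpl in Hp. destruct Hp as [<-|[<-|[]]]; auto.
  - intros H. exists (fst p). split; auto. destruct p as [s [|]]; simpl; auto.
Qed.

Lemma letters_len S : length (letters S) = 2 * length S.
Proof. induction S; simpl; auto. rewrite IHS. lia. Qed.

Lemma inv_ex (s : Cantor -> Cantor) : exists g : Cantor -> Cantor, inT s -> forall x, s (g x) = x.
Proof.
  destruct (classic (inT s)) as [H|H].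
  - destruct (inT_inv_ex s H) as [g [_ G]]. exists g; auto.
  - exists (fun x => x). intros; contradiction.
Qed.
Definition sinv (s : Cantor -> Cantor) : Cantor -> Cantor :=
  proj1_sig (constructive_indefinite_description _ (inv_ex s)).
Lemma sinv_spec s : inT s -> forall x, s (sinv s x) = x.
Proof. unfold sinv. destruct (constructive_indefinite_description _ (inv_ex s)). simpl. auto. Qed.

Fixpoint ev (w : list letter) : Cantor -> Cantor :=
  match w with
  | [] => fun x => x
  | (s, true) :: w => fun x => s (ev w x)
  | (s, false) :: w => fun x => sinv s (ev w x)
  end.

Lemma evals_ev S w : (forall s, In s S -> inT s) -> (forall p, In p w -> In (fst p) S) -> evals w (ev w).
Proof.
  intros HS; induction w as [|[s b] w IH]; intros Hw; simpl. constructor.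
  assert (Ts : inT s) by (apply HS, (Hw (s, b)); simpl; auto).
  assert (Hw' : forall p, In p w -> In (fst p) S) by (intros; apply Hw; simpl; auto).
  destruct b.
  - apply evals_pos. auto.
  - apply (evals_neg s w (ev w)). auto. intros x. apply sinv_spec; auto.
Qed.

Lemma evals_uniq S w g : (forall s, In s S -> inT s) -> (forall p, In p w -> In (fst p) S) -> evals w g -> g = ev w.
Proof.
  intros HS Hw H. induction H; simpl.
  - reflexivity.
  - rewrite IHevals; auto. intros; apply Hw; simpl; auto.
  - assert (Ts : inT s) by (apply HS, (Hw (s, false)); simpl; auto).
    rewrite IHevals in H0 by (intros; apply Hw; simpl; auto).
    apply functional_extensionality; intros x. apply (inT_inj s); auto. rewrite H0, sinv_spec; auto.
Qed.

Definition Elist (S : list (Cantor -> Cantor)) (n : nat) : list (Cantor -> Cantor) :=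
  map ev (wlist (letters S) n).

Lemma Elist_prop S n g : (forall s, In s S -> inT s) -> In g (Elist S n) -> inT g /\ wl_le S g n.
Proof.
  intros HS Hg. unfold Elist in Hg. apply in_map_iff in Hg. destruct Hg as [w [<- Hw]].
  destruct (wlist_prop _ _ _ Hw) as [H1 H2].
  assert (H3 : forall p, In p w -> In (fst p) S) by (intros p Hp; apply letters_in; auto).
  assert (E := evals_ev S w HS H3). split.
  - eapply evals_T; eauto.
  - exists w. auto.
Qed.

Lemma Elist_complete S n g : (forall s, In s S -> inT s) -> wl_le S g n -> In g (Elist S n).
Proof.
  intros HS [w [Hl [Hp He]]]. rewrite (evals_uniq S w g HS Hp He). unfold Elist. apply in_map.
  apply wlist_in; auto. intros p Hq. apply letters_in; auto.
Qed.

Fixpoint reps (l : list (Cantor -> Cantor)) : list (Cantor -> Cantor) :=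
  match l with
  | [] => []
  | g :: l' => let r := reps l' in
      if excluded_middle_informative (exists h, In h r /\ conjT g h) then r else g :: r
  end.

Lemma reps_sub l h : In h (reps l) -> In h l.
Proof.
  induction l; simpl; auto. destruct (excluded_middle_informative _); simpl; intuition.
Qed.

Lemma reps_len l : length (reps l) <= length l.
Proof. induction l; simpl; auto. destruct (excluded_middle_informative _); simpl; lia. Qed.

Lemma reps_cover l g : In g l -> exists h, In h (reps l) /\ conjT g h.
Proof.
  induction l as [|a l IH]; simpl; intros Hg; [destruct Hg|].
  destruct (excluded_middle_informative _) as [Ex|Nex].
  - destruct Hg as [<-|Hg]; auto.
  - destruct Hg as [<-|Hg].
    + exists a. split; simpl; auto. apply conjT_refl.
    + destruct (IH Hg) as [h [H1 H2]]. exists h. split; simpl; auto.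
Qed.

Lemma reps_pair l : forall i j, i < length (reps l) -> j < length (reps l) -> i <> j ->
  ~ conjT (nth i (reps l) (fun x => x)) (nth j (reps l) (fun x => x)).
Proof.
  induction l as [|a l IH]; simpl; intros i j Hi Hj Hij; [lia|].
  destruct (excluded_middle_informative _) as [Ex|Nex]; auto.
  simpl in Hi, Hj. destruct i as [|i], j as [|j]; simpl; try lia.
  - intros Hc. apply Nex. exists (nth j (reps l) (fun x => x)). split; auto. apply nth_In; lia.
  - intros Hc. apply Nex. exists (nth i (reps l) (fun x => x)). split; auto. apply nth_In; lia.
    apply conjT_sym; auto.
  - apply IH; lia.
Qed.

Definition cc (S : list (Cantor -> Cantor)) (n : nat) : nat := length (reps (Elist S n)).

Lemma cc_count S n : (forall s, In s S -> inT s) -> conj_count S n (cc S n).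
Proof.
  intros HS. exists (reps (Elist S n)). split; [reflexivity|split; [|split]].
  - intros g Hg. apply Elist_prop; auto. apply reps_sub; auto.
  - apply reps_pair.
  - intros g Hg Hw. apply reps_cover. apply Elist_complete; auto.
Qed.

Lemma lt_pow2 a : a < 2 ^ a.
Proof. induction a; simpl; lia. Qed.

Lemma upper S : dominated (cc S) (fun n => 2 ^ n).
Proof.
  set (lam := length (letters S) + 1). exists lam. split; [unfold lam; lia|]. intros n.
  assert (H1 : cc S n <= (length (letters S) + 1) ^ n).
  { unfold cc. eapply Nat.le_trans. apply reps_len. unfold Elist. rewrite length_map. apply wlist_len. }
  assert (H2 : (length (letters S) + 1) ^ n <= 2 ^ (lam * n)).
  { rewrite Nat.pow_mul_r. apply Nat.pow_le_mono_l. pose proof (lt_pow2 lam). unfold lam in *. lia. }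
  assert (H3 : 2 ^ (lam * n) <= 2 ^ (lam * n + lam)) by (apply Nat.pow_le_mono_r; lia).
  assert (1 <= lam) by (unfold lam; lia). nia.
Qed.

Lemma Hf_len S K0 bs : wl_le S Mk K0 -> wl_le S (Bc true) K0 -> wl_le S (Bc false) K0 ->
  wl_le S A K0 -> wl_le S Ainv K0 -> wl_le S (Hf bs) (3 * K0 * length bs).
Proof.
  intros HM HBt HBf HA HAi. induction bs as [|c bs IH]; simpl.
  - apply (wl_le_mono _ _ 0); [apply wl_le_id|lia].
  - apply wl_le_mono with (n := K0 + (K0 + (3 * K0 * length bs + K0))); [|lia].
    apply wl_le_app. destruct c; auto.
    apply wl_le_app; auto. apply (wl_le_app S (Hf bs) Ainv); auto.
Qed.

Lemma lower S : generates_T S -> dominated (fun n => 2 ^ n) (cc S).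
Proof.
  intros [HS HG].
  destruct (HG Mk (proj1 Mk_TM)) as [n1 E1].
  destruct (HG (Bc true) (proj1 (Bc_TM true))) as [n2 E2].
  destruct (HG (Bc false) (proj1 (Bc_TM false))) as [n3 E3].
  destruct (HG A A_T) as [n4 E4].
  destruct (HG Ainv Ainv_T) as [n5 E5].
  set (K0 := n1 + n2 + n3 + n4 + n5).
  assert (Hb : forall b, wl_le S (gfam b) (3 * K0 * (length b + 1))).
  { intros b. apply wl_le_mono with (n := K0 + 3 * K0 * length b); [|nia].
    apply (wl_le_app S Mk (Hf b) K0 (3 * K0 * length b)). apply (wl_le_mono _ _ n1); auto; unfold K0; lia.
    apply Hf_len; eapply wl_le_mono; eauto; unfold K0; nia. }
  set (lam := 3 * K0 + 1). exists lam. split; [unfold lam; lia|]. intros n.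
  set (m := lam * n + lam).
  set (l := reps (Elist S m)).
  assert (Hex : forall b, exists h, length b = n -> In h l /\ conjT (gfam b) h).
  { intros b. destruct (Nat.eq_dec (length b) n) as [E|E]; [|exists (fun x => x); intros; contradiction].
    assert (In (gfam b) (Elist S m)).
    { apply Elist_complete; auto. apply wl_le_mono with (n := 3 * K0 * (length b + 1)); auto.
      unfold m, lam. rewrite E. nia. }
    destruct (reps_cover _ _ H) as [h Hh]. exists h. auto. }
  set (rep := fun b => proj1_sig (constructive_indefinite_description _ (Hex b))).
  assert (Hrep : forall b, length b = n -> In (rep b) l /\ conjT (gfam b) (rep b)).
  { intros b Hb'. unfold rep. destruct (constructive_indefinite_description _ (Hex b)). simpl. auto. }
  assert (ND : NoDup (map rep (allw n))).
  { apply NoDup_map_in; [|apply allw_nodup]. intros a b Ha Hb' E.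
    apply allw_in in Ha, Hb'. apply nonconj. congruence.
    destruct (Hrep a Ha) as [_ C1]. destruct (Hrep b Hb') as [_ C2].
    eapply conjT_trans. apply C1. rewrite E. apply conjT_sym, C2. }
  assert (Inc : incl (map rep (allw n)) l).
  { intros h Hh. apply in_map_iff in Hh. destruct Hh as [b [<- Hb']]. apply allw_in in Hb'. apply Hrep; auto. }
  pose proof (NoDup_incl_length ND Inc) as HL. rewrite length_map, allw_len in HL.
  unfold cc. fold m. fold l. assert (1 <= lam) by (unfold lam; lia). nia.
Qed.

Theorem mainTheorem5 :
  (exists S : list (Cantor -> Cantor), generates_T S) /\
  forall S : list (Cantor -> Cantor), generates_T S ->
    exists c : nat -> nat,
      (forall n, conj_count S n (c n)) /\ growth_equiv c (fun n => 2 ^ n).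
Proof.
  split.
  - exists S0. apply S0_generates.
  - intros S HS. exists (cc S). split.
    + intros n. apply cc_count. apply HS.
    + split. apply upper. apply lower, HS.
Qed.
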